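(* There exists an absolute constant $C$ such that for all $t\in\mathbb N$ and all real $\vartheta$ with $\lvert\vartheta\rvert\le\pi$ we have $\|X_t(\vartheta)\|_\infty\le C\lvert\vartheta\rvert^3$.
   Context: Let $\mathsf r(n)$ be the number of (overlapping) occurrences of $\mathtt{11}$ in the binary expansion of $n\in\mathbb N=\{0,1,\dots\}$, and $d(t,n)=\mathsf r(n+t)-\mathsf r(n)$. Let $a_t(k)$, $b_t(k)$ be the asymptotic densities (which exist and form probability distributions on $\mathbb Z$) of $\{n:d(t,2n)=k\}$, $\{n:d(t,2n+1)=k\}$; let $m_t^\alpha,m_t^\beta$ be their means and $v_t^\alpha,v_t^\beta$ their variances. Write $\mathrm e(\vartheta)=\exp(i\vartheta)$. Define $\alpha^*_t(\vartheta)=\exp(m_t^\alpha i\vartheta-\frac12v_t^\alpha\vartheta^2)$, $\beta^*_t(\vartheta)=\exp(m_t^\beta i\vartheta-\frac12 v_t^\beta\vartheta^2)$ and $S^*_t(\vartheta)=(\alpha^*_{2t},\beta^*_{2t},\alpha^*_{2t+1},\beta^*_{2t+1},\alpha^*_{2t+2},\beta^*_{2t+2})^T(\vartheta)$. With $x=\mathrm e(\vartheta)$, define the $6\times6$ matrices \[ D_0(\vartheta)=\frac12\begin{pmatrix}1&1&0&0&0&0\\1&1&0&0&0&0\\1&x&0&0&0&0\\0&0&1&x^{-1}&0&0\\0&0&1&1&0&0\\0&0&x&x^{-1}&0&0\end{pmatrix},\quad D_1(\vartheta)=\frac12\begin{pmatrix}0&0&1&1&0&0\\0&0&x&x^{-1}&0&0\\0&0&x&1&0&0\\0&0&0&0&1&x^{-1}\\0&0&0&0&1&1\\0&0&0&0&1&1\end{pmatrix},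 \] and for $t\in\mathbb N$ let $X_{2t}(\vartheta)=S^*_{2t}(\vartheta)-D_0(\vartheta)S^*_t(\vartheta)$ and $X_{2t+1}(\vartheta)=S^*_{2t+1}(\vartheta)-D_1(\vartheta)S^*_t(\vartheta)$. Here $\|\cdot\|_\infty$ is the maximum norm on $\mathbb C^6$. *)

(* Defs.v *)
From Stdlib Require Import Reals Lra Lia ZArith Arith List.
From Coquelicot Require Import Coquelicot.
Import ListNotations.
Open Scope R_scope.

(* binary expansion of n (least significant bit first; 0 has empty expansion) *)
Fixpoint pbits (p : positive) : list bool :=
  match p with
  | xH => [true]
  | xO q => false :: pbits q
  | xI q => true :: pbits q
  end.
Definition bits (n : nat) : list bool :=
  match N.of_nat n with N0 => [] | Npos p => pbits p end.

Fixpoint count11 (l : list bool) : nat :=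
  match l with
  | a :: ((b :: _) as t) => ((if andb a b then 1 else 0) + count11 t)%nat
  | _ => 0%nat
  end.

Definition r (n : nat) : nat := count11 (bits n).

Definition d (t n : nat) : Z := (Z.of_nat (r (n + t)) - Z.of_nat (r n))%Z.

Definition density (P : nat -> bool) : R :=
  real (Lim_seq (fun N => INR (length (filter P (seq 0 N))) / INR N)).

Definition a_dens (t : nat) (k : Z) : R := density (fun n => Z.eqb (d t (2 * n)) k).
Definition b_dens (t : nat) (k : Z) : R := density (fun n => Z.eqb (d t (2 * n + 1)) k).

Definition zsum (f : Z -> R) : R :=
  Series (fun j => f (Z.of_nat j)) + Series (fun j => f (- Z.of_nat (S j))%Z).

Definition mean (p : Z -> R) : R := zsum (fun k => IZR k * p k).
Definition variance (p : Z -> R) : R := zsum (fun k => (IZR k - mean p) ^ 2 * p k).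

Definition m_alpha t := mean (a_dens t).
Definition m_beta t := mean (b_dens t).
Definition v_alpha t := variance (a_dens t).
Definition v_beta t := variance (b_dens t).

Definition ee (th : R) : C := (cos th, sin th).

Definition alpha_star (t : nat) (th : R) : C :=
  RtoC (exp (- / 2 * v_alpha t * th ^ 2)) * ee (m_alpha t * th).
Definition beta_star (t : nat) (th : R) : C :=
  RtoC (exp (- / 2 * v_beta t * th ^ 2)) * ee (m_beta t * th).

(* 6-vectors and 6x6 matrices as functions on indices 0..5 *)
Definition S_star (t : nat) (th : R) (i : nat) : C :=
  match i with
  | 0 => alpha_star (2 * t) th
  | 1 => beta_star (2 * t) th
  | 2 => alpha_star (2 * t + 1) th
  | 3 => beta_star (2 * t + 1) th
  | 4 => alpha_star (2 * t + 2) th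
  | _ => beta_star (2 * t + 2) th
  end.

Definition row6 (c0 c1 c2 c3 c4 c5 : C) (j : nat) : C :=
  match j with 0 => c0 | 1 => c1 | 2 => c2 | 3 => c3 | 4 => c4 | _ => c5 end.

Definition D0 (th : R) (i j : nat) : C :=
  let x := ee th in
  (/ 2 * match i with
   | 0 => row6 1 1 0 0 0 0 j
   | 1 => row6 1 1 0 0 0 0 j
   | 2 => row6 1 x 0 0 0 0 j
   | 3 => row6 0 0 1 (/ x) 0 0 j
   | 4 => row6 0 0 1 1 0 0 j
   | _ => row6 0 0 x (/ x) 0 0 j
   end)%C.

Definition D1 (th : R) (i j : nat) : C :=
  let x := ee th in
  (/ 2 * match i with
   | 0 => row6 0 0 1 1 0 0 j
   | 1 => row6 0 0 x (/ x) 0 0 j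
   | 2 => row6 0 0 x 1 0 0 j
   | 3 => row6 0 0 0 0 1 (/ x) j
   | 4 => row6 0 0 0 0 1 1 j
   | _ => row6 0 0 0 0 1 1 j
   end)%C.

Definition mv6 (M : nat -> nat -> C) (v : nat -> C) (i : nat) : C :=
  (M i 0%nat * v 0%nat + M i 1%nat * v 1%nat + M i 2%nat * v 2%nat
   + M i 3%nat * v 3%nat + M i 4%nat * v 4%nat + M i 5%nat * v 5%nat)%C.

Definition X (n : nat) (th : R) (i : nat) : C :=
  if Nat.even n
  then (S_star n th i - mv6 (D0 th) (S_star (Nat.div2 n) th) i)%C
  else (S_star n th i - mv6 (D1 th) (S_star (Nat.div2 n) th) i)%C.

Definition maxnorm6 (v : nat -> C) : R :=
  Rmax (Cmod (v 0%nat)) (Rmax (Cmod (v 1%nat)) (Rmax (Cmod (v 2%nat))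
    (Rmax (Cmod (v 3%nat)) (Rmax (Cmod (v 4%nat)) (Cmod (v 5%nat)))))).

(* Main.v *)
Require Import Defs.
From Stdlib Require Import Reals Lra Lia ZArith NArith Arith List.
From Coquelicot Require Import Coquelicot.
Import ListNotations.
Open Scope R_scope.

Definition G (th m v : R) : C := RtoC (exp (- / 2 * v * th ^ 2)) * ee (m * th).

Lemma Cmod_le_sum (x y : R) : Cmod (x, y) <= Rabs x + Rabs y.
Proof.
  unfold Cmod; cbn [fst snd].
  pose proof (Rabs_pos x); pose proof (Rabs_pos y).
  rewrite <- (sqrt_pow2 (Rabs x + Rabs y)) by lra.
  apply sqrt_le_1_alt.
  rewrite <- (pow2_abs x), <- (pow2_abs y).
  assert (0 <= 2 * Rabs x * Rabs y) by (apply Rmult_le_pos; lra).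
  simpl; ring_simplify; lra.
Qed.

Lemma exp_hi (y : R) : y < 1 -> exp y <= / (1 - y).
Proof.
  intro Hy. pose proof (exp_ineq1_le (- y)).
  rewrite exp_Ropp in H. pose proof (exp_pos y).
  apply Rle_Rinv in H; [| lra | apply Rinv_0_lt_compat; lra].
  rewrite Rinv_inv in H. replace (1 + - y) with (1 - y) in H by ring. exact H.
Qed.

Lemma absle (y b : R) : Rabs y <= b -> - b <= y <= b.
Proof. unfold Rabs; destruct (Rcase_abs y); lra. Qed.

Lemma expm1_bound (y : R) : Rabs y <= 1/2 -> Rabs (exp y - 1) <= 2 * Rabs y.
Proof.
  intro Hy. pose proof (exp_ineq1_le y).
  pose proof (absle _ _ Hy) as Hy'.
  assert (y < 1) by lra.
  pose proof (exp_hi y H0).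
  assert (/ (1 - y) - 1 <= 2 * Rabs y).
  { assert (0 < 1 - y) by lra.
    replace (/ (1 - y) - 1) with (y / (1 - y)) by (field; lra).
    destruct (Rle_dec 0 y).
    - rewrite Rabs_right by lra. apply Rmult_le_reg_r with (1 - y); [lra|].
      unfold Rdiv; rewrite Rmult_assoc, Rinv_l by lra. nra.
    - assert (y / (1 - y) <= 0). { unfold Rdiv. apply Rmult_le_0_r; [lra|]. left; apply Rinv_0_lt_compat; lra. }
      pose proof (Rabs_pos y). lra. }
  apply Rabs_le. pose proof (Rabs_pos y). pose proof (Rle_abs (-y)). rewrite Rabs_Ropp in H4. lra.
Qed.

Lemma expneg_bound (a : R) : 0 <= a -> 1 - a <= exp (- a) <= 1 - a + a ^ 2.
Proof.
  intro Ha. split.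
  - pose proof (exp_ineq1_le (- a)). lra.
  - rewrite exp_Ropp. pose proof (exp_ineq1_le a).
    apply Rle_trans with (/ (1 + a)).
    + apply Rinv_le_contravar; lra.
    + apply Rmult_le_reg_r with (1 + a); [lra|].
      rewrite Rinv_l by lra. nra.
Qed.

Lemma cosh_bound (y : R) : Rabs y <= 1/2 ->
  0 <= (exp y + exp (- y)) / 2 - 1 <= 2 * y ^ 2.
Proof.
  intro Hy. pose proof (absle _ _ Hy) as Hy'.
  pose proof (exp_ineq1_le y). pose proof (exp_ineq1_le (- y)).
  pose proof (exp_hi y ltac:(lra)). pose proof (exp_hi (- y) ltac:(lra)).
  split; [lra|].
  assert (/ (1 - y) + / (1 - - y) - 2 <= 4 * y ^ 2).
  { replace (/ (1 - y) + / (1 - - y) - 2) with (2 * y ^ 2 / ((1 - y) * (1 + y))) by (field; lra).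
    assert (/ ((1 - y) * (1 + y)) <= 2).
    { replace 2 with (/ / 2) by (rewrite Rinv_inv; reflexivity).
      apply Rinv_le_contravar; nra. }
    assert (0 <= y ^ 2) by (simpl; nra).
    unfold Rdiv. nra. }
  lra.
Qed.

Lemma cos_bnd (x : R) : Rabs x <= 1 -> 1 - x ^ 2 / 2 <= cos x <= 1 - x ^ 2 / 2 + x ^ 4 / 24.
Proof.
  intro Hx. pose proof (absle _ _ Hx). pose proof PI2_1.
  destruct (cos_bound x 0 ltac:(lra) ltac:(lra)) as [H1 H2].
  replace (cos_approx x (2 * 0 + 1)) with (1 - x ^ 2 / 2) in H1
    by (unfold cos_approx, cos_term; simpl; field).
  replace (cos_approx x (2 * (0 + 1))) with (1 - x ^ 2 / 2 + x ^ 4 / 24) in H2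
    by (unfold cos_approx, cos_term; simpl; field).
  lra.
Qed.

Lemma sin_bnd_pos (x : R) : 0 <= x <= 1 -> Rabs (sin x) <= x.
Proof.
  intro Hx. pose proof PI2_1.
  destruct (sin_bound x 0 ltac:(lra) ltac:(lra)) as [H1 H2].
  replace (sin_approx x (2 * 0 + 1)) with (x - x ^ 3 / 6) in H1
    by (unfold sin_approx, sin_term; simpl; field).
  replace (sin_approx x (2 * (0 + 1))) with (x - x ^ 3 / 6 + x ^ 5 / 120) in H2
    by (unfold sin_approx, sin_term; simpl; field).
  assert (x * x <= 1) by nra. assert (0 <= x * x) by nra.
  apply Rabs_le. split.
  - assert (x ^ 3 <= x) by (simpl; nra). lra.
  - assert (x ^ 5 / 120 <= x ^ 3 / 6).
    { assert (0 <= x ^ 3) by (simpl; nra). assert (x ^ 5 <= x ^ 3) by (replace (x^5) with (x^3 * (x*x)) by ring; nra). lra. }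
    lra.
Qed.

Lemma sin_bnd (x : R) : Rabs x <= 1 -> Rabs (sin x) <= Rabs x.
Proof.
  intro Hx. destruct (Rle_dec 0 x).
  - rewrite (Rabs_right x) by lra. apply sin_bnd_pos. rewrite Rabs_right in Hx; lra.
  - rewrite <- (Ropp_involutive x). rewrite sin_neg, !Rabs_Ropp.
    rewrite (Rabs_left x) by lra. apply sin_bnd_pos. rewrite Rabs_left in Hx; lra.
Qed.

Lemma Cmod_ee (u : R) : Cmod (ee u) = 1.
Proof.
  unfold Cmod, ee; cbn [fst snd]. rewrite <- sqrt_1. f_equal.
  pose proof (sin2_cos2 u). unfold Rsqr in H. simpl. lra.
Qed.

Lemma exp_le1 (x : R) : x <= 0 -> exp x <= 1.
Proof. intro H. destruct H. left; rewrite <- exp_0; apply exp_increasing; auto. subst; rewrite exp_0; lra. Qed.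

Lemma Cmod_G (th m v : R) : 0 <= v -> Cmod (G th m v) <= 1.
Proof.
  intro Hv. unfold G. rewrite Cmod_mult, Cmod_ee, Cmod_R, Rmult_1_r.
  rewrite Rabs_right by (left; apply exp_pos).
  apply exp_le1.
  assert (0 <= v * th ^ 2) by (apply Rmult_le_pos; [lra| apply pow2_ge_0]). nra.
Qed.

Lemma G_pair (th m v : R) : G th m v = (exp (- / 2 * v * th ^ 2) * cos (m * th), exp (- / 2 * v * th ^ 2) * sin (m * th)).
Proof. unfold G, ee, RtoC. apply injective_projections; simpl; ring. Qed.

Lemma core (th a b v1 v2 M V : R) : 0 <= v1 -> 0 <= v2 -> Rabs (a - b) <= 3 -> Rabs (v1 - v2) <= 2 ->
  M = (a + b) / 2 -> V = (v1 + v2) / 2 + ((a - b) / 2) ^ 2 ->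
  Cmod (G th M V - / 2 * (G th a v1 + G th b v2))%C <= 16 * Rabs th ^ 3.
Proof.
  intros Hv1 Hv2 Hab Hv HM HV.
  assert (HV0 : 0 <= V) by (rewrite HV; pose proof (pow2_ge_0 ((a - b) / 2)); lra).
  destruct (Rle_dec (1/2) (Rabs th)) as [Hbig | Hsmall].
  - eapply Rle_trans.
    { unfold Cminus. eapply Rle_trans; [apply Cmod_triangle|]. rewrite Cmod_opp, Cmod_mult.
      apply Rplus_le_compat; [apply Cmod_G; exact HV0|].
      apply Rmult_le_compat_l; [apply Cmod_ge_0|]. eapply Rle_trans; [apply Cmod_triangle|].
      apply Rplus_le_compat; apply Cmod_G; assumption. }
    rewrite Cmod_inv by (intro H; injection H; lra). rewrite Cmod_R, Rabs_right by lra.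
    assert (1/8 <= Rabs th ^ 3) by (simpl; nra). lra.
  - apply Rnot_le_lt in Hsmall.
    set (d := (a - b) / 2). set (w := (v1 + v2) / 2). set (e := (v1 - v2) / 2).
    assert (Ha : a = M + d) by (unfold d; lra). assert (Hb : b = M - d) by (unfold d; lra).
    assert (H1 : v1 = w + e) by (unfold w, e; lra). assert (H2 : v2 = w - e) by (unfold w, e; lra).
    fold d in HV. fold w in HV.
    rewrite Ha, Hb, H1, H2, HV, !G_pair.
    set (E0 := exp (- / 2 * w * th ^ 2)).
    set (eA := exp (- (d ^ 2 * th ^ 2 / 2))).
    set (P := exp (e * th ^ 2 / 2)). set (Q := exp (- (e * th ^ 2 / 2))).
    set (cM := cos (M * th)). set (sM := sin (M * th)).
    set (cD := cos (d * th)). set (sD := sin (d * th)).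
    assert (HE1 : exp (- / 2 * (w + d ^ 2) * th ^ 2) = E0 * eA) by (unfold E0, eA; rewrite <- exp_plus; f_equal; field).
    assert (HE2 : exp (- / 2 * (w + e) * th ^ 2) = E0 * Q) by (unfold E0, Q; rewrite <- exp_plus; f_equal; field).
    assert (HE3 : exp (- / 2 * (w - e) * th ^ 2) = E0 * P) by (unfold E0, P; rewrite <- exp_plus; f_equal; field).
    assert (HC1 : cos ((M + d) * th) = cM * cD - sM * sD) by (unfold cM, cD, sM, sD; rewrite Rmult_plus_distr_r; apply cos_plus).
    assert (HS1 : sin ((M + d) * th) = sM * cD + cM * sD) by (unfold cM, cD, sM, sD; rewrite Rmult_plus_distr_r, sin_plus; ring).
    assert (HC2 : cos ((M - d) * th) = cM * cD + sM * sD) by (unfold cM, cD, sM, sD; rewrite Rmult_minus_distr_r; rewrite cos_minus; ring).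
    assert (HS2 : sin ((M - d) * th) = sM * cD - cM * sD) by (unfold cM, cD, sM, sD; rewrite Rmult_minus_distr_r, sin_minus; ring).
    rewrite HE1, HE2, HE3, HC1, HS1, HC2, HS2.
    set (Rr := eA - cD * ((P + Q) / 2)). set (Ii := sD * ((P - Q) / 2)).
    replace (Cminus (E0 * eA * cM, E0 * eA * sM) (Cmult (/ 2)%C (Cplus (E0 * Q * (cM * cD - sM * sD), E0 * Q * (sM * cD + cM * sD)) (E0 * P * (cM * cD + sM * sD), E0 * P * (sM * cD - cM * sD)))))
      with (@pair R R (E0 * (cM * Rr - sM * Ii)) (E0 * (sM * Rr + cM * Ii)))
      by (apply injective_projections; unfold Rr, Ii; simpl; field).
    eapply Rle_trans; [apply Cmod_le_sum|].
    assert (HE0 : 0 < E0 <= 1).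
    { split; [apply exp_pos|]. unfold E0. apply exp_le1.
      assert (0 <= w * th ^ 2) by (apply Rmult_le_pos; [unfold w; lra| apply pow2_ge_0]). nra. }
    assert (HcM : Rabs cM <= 1) by apply Rabs_le, COS_bound.
    assert (HsM : Rabs sM <= 1) by apply Rabs_le, SIN_bound.
    assert (Hre : Rabs (E0 * (cM * Rr - sM * Ii)) <= Rabs Rr + Rabs Ii).
    { rewrite Rabs_mult, (Rabs_right E0) by lra.
      assert (Rabs (cM * Rr - sM * Ii) <= Rabs Rr + Rabs Ii).
      { unfold Rminus. eapply Rle_trans; [apply Rabs_triang|]. rewrite Rabs_Ropp, !Rabs_mult.
        pose proof (Rabs_pos Rr); pose proof (Rabs_pos Ii). nra. }
      pose proof (Rabs_pos (cM * Rr - sM * Ii)). nra. }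
    assert (Him : Rabs (E0 * (sM * Rr + cM * Ii)) <= Rabs Rr + Rabs Ii).
    { rewrite Rabs_mult, (Rabs_right E0) by lra.
      assert (Rabs (sM * Rr + cM * Ii) <= Rabs Rr + Rabs Ii).
      { eapply Rle_trans; [apply Rabs_triang|]. rewrite !Rabs_mult.
        pose proof (Rabs_pos Rr); pose proof (Rabs_pos Ii). nra. }
      pose proof (Rabs_pos (sM * Rr + cM * Ii)). nra. }
    set (t := Rabs th).
    assert (Ht : 0 <= t < 1/2) by (unfold t; split; [apply Rabs_pos| lra]).
    assert (Hd : Rabs d <= 3/2).
    { pose proof (absle _ _ Hab). apply Rabs_le. unfold d. lra. }
    assert (He : Rabs e <= 1).
    { pose proof (absle _ _ Hv). apply Rabs_le. unfold e. lra. }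
    set (X := Rabs d * t). set (Y := Rabs e * t ^ 2 / 2).
    assert (HX : 0 <= X <= 3/2 * t) by (unfold X; pose proof (Rabs_pos d); split; nra).
    assert (Ht2 : 0 <= t ^ 2 <= t / 2) by (simpl; nra).
    assert (HY : 0 <= Y <= t ^ 2 / 2) by (unfold Y; pose proof (Rabs_pos e); split; nra).
    assert (HxX : Rabs (d * th) = X) by (unfold X, t; apply Rabs_mult).
    assert (Hx2 : (d * th) ^ 2 = X ^ 2) by (rewrite <- HxX; rewrite pow2_abs; reflexivity).
    assert (Hx4 : (d * th) ^ 4 = X ^ 4) by (replace 4%nat with (2 * 2)%nat by reflexivity; rewrite !pow_mult, Hx2; reflexivity).
    assert (Hy : Rabs (e * th ^ 2 / 2) = Y).
    { unfold Y, t. unfold Rdiv. rewrite !Rabs_mult, Rabs_inv, <- RPow_abs, (Rabs_right 2) by lra. reflexivity. }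
    assert (HX1 : Rabs (d * th) <= 1) by lra.
    destruct (cos_bnd _ HX1) as [Hc1 Hc2]. fold cD in Hc1, Hc2.
    assert (Hs : Rabs sD <= X) by (rewrite <- HxX; apply sin_bnd; exact HX1).
    assert (Ha0 : 0 <= d ^ 2 * th ^ 2 / 2) by (pose proof (pow2_ge_0 d); pose proof (pow2_ge_0 th); assert (0 <= d ^ 2 * th ^ 2) by (apply Rmult_le_pos; assumption); lra).
    destruct (expneg_bound _ Ha0) as [He1 He2]. fold eA in He1, He2.
    assert (Hax : d ^ 2 * th ^ 2 / 2 = X ^ 2 / 2) by (rewrite <- Hx2; field).
    rewrite Hax in He1, He2.
    assert (HeAc : Rabs (eA - cD) <= X ^ 4 / 4).
    { apply Rabs_le. rewrite Hx2, Hx4 in *. assert ((X^2/2)^2 = X^4/4) by field. assert (0 <= X^4) by (apply pow_le; lra). lra. }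
    assert (HyY : Rabs (e * th ^ 2 / 2) <= 1/2) by (rewrite Hy; lra).
    destruct (cosh_bound _ HyY) as [Hch1 Hch2]. fold P in Hch1, Hch2. fold Q in Hch1, Hch2.
    assert (Hy2 : (e * th ^ 2 / 2) ^ 2 = Y ^ 2) by (rewrite <- Hy, pow2_abs; reflexivity).
    rewrite Hy2 in Hch2.
    pose proof (expm1_bound _ HyY) as HP1. fold P in HP1. rewrite Hy in HP1.
    assert (HyY' : Rabs (- (e * th ^ 2 / 2)) <= 1/2) by (rewrite Rabs_Ropp; lra).
    pose proof (expm1_bound _ HyY') as HQ1. fold Q in HQ1. rewrite Rabs_Ropp, Hy in HQ1.
    assert (HcD : Rabs cD <= 1) by apply Rabs_le, COS_bound.
    assert (HRr : Rabs Rr <= X ^ 4 / 4 + 2 * Y ^ 2).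
    { replace Rr with ((eA - cD) - cD * ((P + Q) / 2 - 1)) by (unfold Rr; field).
      unfold Rminus at 1. eapply Rle_trans; [apply Rabs_triang|]. rewrite Rabs_Ropp, Rabs_mult.
      rewrite (Rabs_right ((P + Q) / 2 - 1)) by lra.
      assert (Rabs cD * ((P + Q) / 2 - 1) <= 2 * Y ^ 2) by (pose proof (Rabs_pos cD); nra).
      lra. }
    assert (HIi : Rabs Ii <= 2 * X * Y).
    { unfold Ii. rewrite Rabs_mult.
      assert (Rabs ((P - Q) / 2) <= 2 * Y).
      { replace ((P - Q) / 2) with ((P - 1) / 2 - (Q - 1) / 2) by field.
        unfold Rminus at 1. eapply Rle_trans; [apply Rabs_triang|]. rewrite Rabs_Ropp.
        unfold Rdiv. rewrite !Rabs_mult, Rabs_inv, (Rabs_right 2) by lra. lra. }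
      pose proof (Rabs_pos sD). pose proof (Rabs_pos ((P - Q) / 2)). nra. }
    assert (Hfin : 2 * (X ^ 4 / 4 + 2 * Y ^ 2 + 2 * X * Y) <= 16 * t ^ 3).
    { assert (X ^ 4 <= (3/2 * t) ^ 4) by (apply pow_incr; lra).
      assert (Y ^ 2 <= (t ^ 2 / 2) ^ 2) by (apply pow_incr; lra).
      assert (X * Y <= 3/2 * t * (t ^ 2 / 2)) by (apply Rmult_le_compat; lra).
      assert (t ^ 4 <= t ^ 3 / 2) by (replace (t^4) with (t^3 * t) by ring; assert (0 <= t^3) by (apply pow_le; lra); nra).
      replace ((3/2 * t) ^ 4) with (81/16 * t ^ 4) in * by field.
      replace ((t ^ 2 / 2) ^ 2) with (t ^ 4 / 4) in * by field.
      replace (3/2 * t * (t ^ 2 / 2)) with (3/4 * t ^ 3) in * by field.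
      assert (0 <= t ^ 3) by (apply pow_le; lra). lra. }
    lra.
Qed.

Definition par (s : nat) : R := if Nat.even s then 0 else 1.
Definition mixOK (M V m1 v1 m2 v2 : R) : Prop :=
  M = (m1 + m2) / 2 /\ V = (v1 + v2) / 2 + ((m1 - m2) / 2) ^ 2.

Lemma ee_shift (th s m v : R) : (ee (s * th) * G th m v = G th (m + s) v)%C.
Proof.
  rewrite !G_pair. unfold ee. apply injective_projections; simpl;
  rewrite Rmult_plus_distr_r; [rewrite cos_plus | rewrite sin_plus]; ring.
Qed.

Lemma ee0 (th : R) : ee (0 * th) = 1%C.
Proof. rewrite Rmult_0_l. unfold ee. rewrite cos_0, sin_0. reflexivity. Qed.
Lemma ee1 (th : R) : ee (1 * th) = ee th.
Proof. rewrite Rmult_1_l. reflexivity. Qed.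
Lemma eem1 (th : R) : ee (-1 * th) = (/ ee th)%C.
Proof.
  unfold ee, Cinv. cbn [fst snd]. pose proof (sin2_cos2 th). unfold Rsqr in H.
  replace (-1 * th) with (- th) by ring. rewrite cos_neg, sin_neg.
  replace (cos th ^ 2 + sin th ^ 2) with 1 by (simpl; lra).
  apply injective_projections; cbn [fst snd]; field.
Qed.

Lemma rowlem (th M V m1 v1 m2 v2 s1 s2 : R) :
  0 <= v1 -> 0 <= v2 -> Rabs m1 <= 1/2 -> Rabs m2 <= 1/2 -> Rabs s1 <= 1 -> Rabs s2 <= 1 ->
  Rabs (v1 - v2) <= 2 ->
  mixOK M V (m1 + s1) v1 (m2 + s2) v2 ->
  Cmod (G th M V - / 2 * (ee (s1 * th) * G th m1 v1 + ee (s2 * th) * G th m2 v2))%C <= 16 * Rabs th ^ 3.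
Proof.
  intros. rewrite !ee_shift. destruct H6.
  apply core; auto.
  apply absle in H1; apply absle in H2; apply absle in H3; apply absle in H4. apply Rabs_le. lra.
Qed.

Lemma rowAB (th M V : R) (t : nat) (s1 s2 : R) :
  0 <= v_alpha t -> 0 <= v_beta t -> Rabs (m_alpha t) <= 1/2 -> Rabs (m_beta t) <= 1/2 ->
  Rabs s1 <= 1 -> Rabs s2 <= 1 -> Rabs (v_alpha t - v_beta t) <= 2 ->
  mixOK M V (m_alpha t + s1) (v_alpha t) (m_beta t + s2) (v_beta t) ->
  Cmod (G th M V - / 2 * (ee (s1 * th) * alpha_star t th + ee (s2 * th) * beta_star t th))%C <= 16 * Rabs th ^ 3.
Proof. intros. apply rowlem; auto. Qed.

Lemma par_even (u : nat) : par (2 * u) = 0.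
Proof. unfold par. replace (Nat.even (2 * u)) with true; [reflexivity|]. symmetry; apply Nat.even_spec; exists u; lia. Qed.
Lemma par_odd (u : nat) : par (2 * u + 1) = 1.
Proof. unfold par. replace (Nat.even (2 * u + 1)) with false; [reflexivity|].
  symmetry. apply Bool.not_true_iff_false. intro H. apply Nat.even_spec in H. destruct H. lia. Qed.

Lemma par_even2 (u : nat) : par (2 * u + 2) = 0.
Proof. replace (2 * u + 2)%nat with (2 * (u + 1))%nat by lia. apply par_even. Qed.

Lemma Rabs1 : Rabs 1 <= 1. Proof. rewrite Rabs_R1; lra. Qed.
Lemma Rabs0 : Rabs 0 <= 1. Proof. rewrite Rabs_R0; lra. Qed.
Lemma Rabsm1 : Rabs (-1) <= 1. Proof. unfold Rabs; destruct Rcase_abs; lra. Qed.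

Section Assemble.
Hypothesis HF1 : forall s, mixOK (m_alpha (2 * s)) (v_alpha (2 * s)) (m_alpha s + 0) (v_alpha s) (m_beta s + 0) (v_beta s).
Hypothesis HF2 : forall s, mixOK (m_beta (2 * s)) (v_beta (2 * s)) (m_alpha s + par s) (v_alpha s) (m_beta s + - par s) (v_beta s).
Hypothesis HF3 : forall s, mixOK (m_alpha (2 * s + 1)) (v_alpha (2 * s + 1)) (m_alpha s + par s) (v_alpha s) (m_beta s + (1 - par s)) (v_beta s).
Hypothesis HF4 : forall s, mixOK (m_beta (2 * s + 1)) (v_beta (2 * s + 1)) (m_alpha (s + 1) + 0) (v_alpha (s + 1)) (m_beta (s + 1) + -1) (v_beta (s + 1)).
Hypothesis HM : forall s, Rabs (m_alpha s) <= 1/2 /\ Rabs (m_beta s) <= 1/2.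
Hypothesis HV : forall s, 0 <= v_alpha s /\ 0 <= v_beta s /\ Rabs (v_alpha s - v_beta s) <= 2.

Ltac fin T := destruct (HM T); destruct (HV T) as [? [? ?]];
  apply rowAB; try assumption; try exact Rabs1; try exact Rabs0; try exact Rabsm1.

Ltac mxf H := let H1 := fresh in let H2 := fresh in
  pose proof H as [H1 H2]; rewrite ?par_odd, ?par_even2, ?par_even in H1, H2; split; [rewrite H1 | rewrite H2]; field.

Lemma assemble : forall t th, maxnorm6 (X t th) <= 16 * Rabs th ^ 3.
Proof.
  intros n th.
  destruct (Nat.Even_or_Odd n) as [[u Hu] | [u Hu]]; subst n.
  - assert (He : Nat.even (2 * u) = true) by (apply Nat.even_spec; exists u; lia).
    assert (Hd : Nat.div2 (2 * u) = u) by apply Nat.div2_double.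
    unfold X; rewrite He, Hd.
    unfold maxnorm6; repeat apply Rmax_lub.
    + change (S_star (2 * u) th 0) with (G th (m_alpha (2 * (2 * u))) (v_alpha (2 * (2 * u)))).
      replace (mv6 (D0 th) (S_star u th) 0) with (/ 2 * (ee (0 * th) * alpha_star (2 * u) th + ee (0 * th) * beta_star (2 * u) th))%C
        by (rewrite ee0; unfold mv6, D0, row6, S_star; ring).
      fin (2 * u)%nat. apply HF1.
    + change (S_star (2 * u) th 1) with (G th (m_beta (2 * (2 * u))) (v_beta (2 * (2 * u)))).
      replace (mv6 (D0 th) (S_star u th) 1) with (/ 2 * (ee (par (2 * u) * th) * alpha_star (2 * u) th + ee (- par (2 * u) * th) * beta_star (2 * u) th))%C
        by (rewrite par_even, Ropp_0, ee0; unfold mv6, D0, row6, S_star; ring).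
      fin (2 * u)%nat. rewrite par_even; auto using Rabs0. rewrite par_even, Ropp_0; auto using Rabs0. apply HF2.
    + change (S_star (2 * u) th 2) with (G th (m_alpha (2 * (2 * u) + 1)) (v_alpha (2 * (2 * u) + 1))).
      replace (mv6 (D0 th) (S_star u th) 2) with (/ 2 * (ee (par (2 * u) * th) * alpha_star (2 * u) th + ee ((1 - par (2 * u)) * th) * beta_star (2 * u) th))%C
        by (rewrite par_even, Rminus_0_r, ee0, ee1; unfold mv6, D0, row6, S_star; ring).
      fin (2 * u)%nat. rewrite par_even; auto using Rabs0. rewrite par_even, Rminus_0_r; auto using Rabs1. apply HF3.
    + change (S_star (2 * u) th 3) with (G th (m_beta (2 * (2 * u) + 1)) (v_beta (2 * (2 * u) + 1))).
      replace (mv6 (D0 th) (S_star u th) 3) with (/ 2 * (ee (0 * th) * alpha_star (2 * u + 1) th + ee (-1 * th) * beta_star (2 * u + 1) th))%C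
        by (rewrite ee0, eem1; unfold mv6, D0, row6, S_star; ring).
      fin (2 * u + 1)%nat. replace (2 * u + 1)%nat with (2 * u + 1)%nat by lia. apply HF4.
    + change (S_star (2 * u) th 4) with (G th (m_alpha (2 * (2 * u) + 2)) (v_alpha (2 * (2 * u) + 2))).
      replace (2 * (2 * u) + 2)%nat with (2 * (2 * u + 1))%nat by lia.
      replace (mv6 (D0 th) (S_star u th) 4) with (/ 2 * (ee (0 * th) * alpha_star (2 * u + 1) th + ee (0 * th) * beta_star (2 * u + 1) th))%C
        by (rewrite ee0; unfold mv6, D0, row6, S_star; ring).
      fin (2 * u + 1)%nat. apply HF1.
    + change (S_star (2 * u) th 5) with (G th (m_beta (2 * (2 * u) + 2)) (v_beta (2 * (2 * u) + 2))).
      replace (2 * (2 * u) + 2)%nat with (2 * (2 * u + 1))%nat by lia.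
      replace (mv6 (D0 th) (S_star u th) 5) with (/ 2 * (ee (1 * th) * alpha_star (2 * u + 1) th + ee (-1 * th) * beta_star (2 * u + 1) th))%C
        by (rewrite ee1, eem1; unfold mv6, D0, row6, S_star; ring).
      fin (2 * u + 1)%nat. mxf (HF2 (2 * u + 1)).
  - assert (He : Nat.even (2 * u + 1) = false).
    { apply Bool.not_true_iff_false. intro H. apply Nat.even_spec in H. destruct H. lia. }
    assert (Hd : Nat.div2 (2 * u + 1) = u) by (rewrite Nat.add_1_r; apply Nat.div2_succ_double).
    unfold X; rewrite He, Hd.
    unfold maxnorm6; repeat apply Rmax_lub.
    + change (S_star (2 * u + 1) th 0) with (G th (m_alpha (2 * (2 * u + 1))) (v_alpha (2 * (2 * u + 1)))).
      replace (mv6 (D1 th) (S_star u th) 0) with (/ 2 * (ee (0 * th) * alpha_star (2 * u + 1) th + ee (0 * th) * beta_star (2 * u + 1) th))%C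
        by (rewrite ee0; unfold mv6, D1, row6, S_star; ring).
      fin (2 * u + 1)%nat. mxf (HF1 (2 * u + 1)).
    + change (S_star (2 * u + 1) th 1) with (G th (m_beta (2 * (2 * u + 1))) (v_beta (2 * (2 * u + 1)))).
      replace (mv6 (D1 th) (S_star u th) 1) with (/ 2 * (ee (1 * th) * alpha_star (2 * u + 1) th + ee (-1 * th) * beta_star (2 * u + 1) th))%C
        by (rewrite ee1, eem1; unfold mv6, D1, row6, S_star; ring).
      fin (2 * u + 1)%nat. mxf (HF2 (2 * u + 1)).
    + change (S_star (2 * u + 1) th 2) with (G th (m_alpha (2 * (2 * u + 1) + 1)) (v_alpha (2 * (2 * u + 1) + 1))).
      replace (mv6 (D1 th) (S_star u th) 2) with (/ 2 * (ee (1 * th) * alpha_star (2 * u + 1) th + ee (0 * th) * beta_star (2 * u + 1) th))%C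
        by (rewrite ee1, ee0; unfold mv6, D1, row6, S_star; ring).
      fin (2 * u + 1)%nat. mxf (HF3 (2 * u + 1)).
    + change (S_star (2 * u + 1) th 3) with (G th (m_beta (2 * (2 * u + 1) + 1)) (v_beta (2 * (2 * u + 1) + 1))).
      replace (mv6 (D1 th) (S_star u th) 3) with (/ 2 * (ee (0 * th) * alpha_star (2 * u + 2) th + ee (-1 * th) * beta_star (2 * u + 2) th))%C
        by (rewrite ee0, eem1; unfold mv6, D1, row6, S_star; ring).
      fin (2 * u + 2)%nat.
      pose proof (HF4 (2 * u + 1)) as H4. replace (2 * u + 1 + 1)%nat with (2 * u + 2)%nat in H4 by lia. mxf H4.
    + change (S_star (2 * u + 1) th 4) with (G th (m_alpha (2 * (2 * u + 1) + 2)) (v_alpha (2 * (2 * u + 1) + 2))).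
      replace (2 * (2 * u + 1) + 2)%nat with (2 * (2 * u + 2))%nat by lia.
      replace (mv6 (D1 th) (S_star u th) 4) with (/ 2 * (ee (0 * th) * alpha_star (2 * u + 2) th + ee (0 * th) * beta_star (2 * u + 2) th))%C
        by (rewrite ee0; unfold mv6, D1, row6, S_star; ring).
      fin (2 * u + 2)%nat. mxf (HF1 (2 * u + 2)).
    + change (S_star (2 * u + 1) th 5) with (G th (m_beta (2 * (2 * u + 1) + 2)) (v_beta (2 * (2 * u + 1) + 2))).
      replace (2 * (2 * u + 1) + 2)%nat with (2 * (2 * u + 2))%nat by lia.
      replace (mv6 (D1 th) (S_star u th) 5) with (/ 2 * (ee (0 * th) * alpha_star (2 * u + 2) th + ee (0 * th) * beta_star (2 * u + 2) th))%C
        by (rewrite ee0; unfold mv6, D1, row6, S_star; ring).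
      fin (2 * u + 2)%nat. mxf (HF2 (2 * u + 2)).
Qed.
End Assemble.

Lemma par01 (s : nat) : par s = 0 \/ par s = 1.
Proof. unfold par. destruct (Nat.even s); auto. Qed.
Lemma par_S (s : nat) : par (s + 1) = 1 - par s.
Proof. unfold par. rewrite Nat.add_1_r, Nat.even_succ, <- Nat.negb_even. destruct (Nat.even s); simpl; lra. Qed.

Section Abstract.
Variables mA mB vA vB : nat -> R.
Hypothesis HF1 : forall s, mixOK (mA (2 * s)) (vA (2 * s)) (mA s + 0) (vA s) (mB s + 0) (vB s).
Hypothesis HF2 : forall s, mixOK (mB (2 * s)) (vB (2 * s)) (mA s + par s) (vA s) (mB s + - par s) (vB s).
Hypothesis HF3 : forall s, mixOK (mA (2 * s + 1)) (vA (2 * s + 1)) (mA s + par s) (vA s) (mB s + (1 - par s)) (vB s).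
Hypothesis HF4 : forall s, mixOK (mB (2 * s + 1)) (vB (2 * s + 1)) (mA (s + 1) + 0) (vA (s + 1)) (mB (s + 1) + -1) (vB (s + 1)).
Hypothesis H0 : mA 0 = 0 /\ mB 0 = 0.

Lemma means : forall t, mA t = par t / 2 /\ mB t = - par t / 2.
Proof.
  intro t. induction t as [t IH] using (well_founded_induction lt_wf).
  destruct (Nat.Even_or_Odd t) as [[u Hu] | [u Hu]]; subst t.
  - destruct (Nat.eq_dec u 0) as [->|Hu0].
    + simpl. unfold par; simpl. destruct H0. split; lra.
    + destruct (IH u ltac:(lia)) as [Ha Hb]. rewrite par_even.
      destruct (HF1 u) as [E1 _]. destruct (HF2 u) as [E2 _]. split; lra.
  - destruct (IH u ltac:(lia)) as [Ha Hb]. rewrite par_odd.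
    destruct (HF3 u) as [E3 _]. destruct (HF4 u) as [E4 _].
    split; [lra|].
    destruct (Nat.eq_dec u 0) as [->|Hu0].
    + simpl in E4 |- *. destruct (HF3 0) as [E3' _]. simpl in E3'. unfold par in E3'; simpl in E3'. destruct H0. lra.
    + destruct (IH (u + 1)%nat ltac:(lia)) as [Ha' Hb']. lra.
Qed.

Definition vb t := (vA t + vB t) / 2.

Lemma vA2 s : vA (2 * s) = vb s + par s / 4.
Proof. destruct (HF1 s) as [_ E]. destruct (means s) as [Ha Hb]. rewrite E, Ha, Hb. unfold vb.
  destruct (par01 s) as [-> | ->]; field. Qed.
Lemma vB2 s : vB (2 * s) = vb s + 9 * par s / 4.
Proof. destruct (HF2 s) as [_ E]. destruct (means s) as [Ha Hb]. rewrite E, Ha, Hb. unfold vb.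
  destruct (par01 s) as [-> | ->]; field. Qed.
Lemma vA3 s : vA (2 * s + 1) = vb s + (if Req_EM_T (par s) 0 then 1/4 else 1).
Proof. destruct (HF3 s) as [_ E]. destruct (means s) as [Ha Hb]. rewrite E, Ha, Hb. unfold vb.
  destruct (par01 s) as [-> | ->]; destruct Req_EM_T; try lra; field. Qed.
Lemma vB3 s : vB (2 * s + 1) = vb (s + 1) + (if Req_EM_T (par s) 0 then 1 else 1/4).
Proof. destruct (HF4 s) as [_ E]. destruct (means (s + 1)) as [Ha Hb]. rewrite E, Ha, Hb. unfold vb.
  rewrite par_S. destruct (par01 s) as [-> | ->]; destruct Req_EM_T; try lra; field. Qed.

Lemma vb2 s : vb (2 * s) = vb s + 5 * par s / 4.
Proof. unfold vb at 1. rewrite vA2, vB2. field. Qed.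
Lemma vb3 s : vb (2 * s + 1) = (vb s + vb (s + 1)) / 2 + 5 / 8.
Proof. unfold vb at 1. rewrite vA3, vB3. destruct Req_EM_T; field. Qed.

Lemma Ebound : forall t, Rabs (vb (t + 1) - vb t) <= 5/4.
Proof.
  intro t. induction t as [t IH] using (well_founded_induction lt_wf).
  destruct (Nat.Even_or_Odd t) as [[u Hu] | [u Hu]]; subst t.
  - rewrite vb3, vb2.
    destruct (Nat.eq_dec u 0) as [->|Hu0].
    + simpl. replace (vb (0 + 1)) with (vb 1) in * by reflexivity.
      pose proof (vb3 0) as E. simpl in E. unfold par; simpl.
      replace (vb 1 - (vb 0 + 5 * 0 / 4)) with (5/4) by lra. rewrite Rabs_right; lra.
    + pose proof (IH u ltac:(lia)) as Hi. apply absle in Hi. apply Rabs_le.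
      destruct (par01 u) as [-> | ->]; lra.
  - replace (2 * u + 1 + 1)%nat with (2 * (u + 1))%nat by lia.
    rewrite vb3, vb2, par_S.
    pose proof (IH u ltac:(lia)) as Hi. apply absle in Hi. apply Rabs_le.
    destruct (par01 u) as [-> | ->]; lra.
Qed.

Lemma Dbound : forall t, Rabs (vA t - vB t) <= 2.
Proof.
  intro t. destruct (Nat.Even_or_Odd t) as [[u Hu] | [u Hu]]; subst t.
  - rewrite vA2, vB2. apply Rabs_le. destruct (par01 u) as [-> | ->]; lra.
  - rewrite vA3, vB3. pose proof (Ebound u) as Hi. apply absle in Hi. apply Rabs_le.
    destruct Req_EM_T; lra.
Qed.

Lemma mbound : forall t, Rabs (mA t) <= 1/2 /\ Rabs (mB t) <= 1/2.
Proof.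
  intro t. destruct (means t) as [-> ->]. split; apply Rabs_le; destruct (par01 t) as [-> | ->]; lra.
Qed.
End Abstract.

Lemma count11_false l : count11 (false :: l) = count11 l.
Proof. destruct l; reflexivity. Qed.

Lemma head_pbits p : count11 (true :: pbits p) = (Pos.to_nat p mod 2 + count11 (pbits p))%nat.
Proof.
  destruct p; simpl count11 at 1.
  - rewrite Pos2Nat.inj_xI. replace (S (2 * Pos.to_nat p)) with (1 + Pos.to_nat p * 2)%nat by lia.
    rewrite Nat.Div0.mod_add. reflexivity.
  - rewrite Pos2Nat.inj_xO. replace (2 * Pos.to_nat p)%nat with (0 + Pos.to_nat p * 2)%nat by lia.
    rewrite Nat.Div0.mod_add. reflexivity.
  - reflexivity.
Qed.

Lemma r_double n : r (2 * n) = r n.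
Proof.
  unfold r, bits. rewrite Nat2N.inj_mul. destruct (N.of_nat n) eqn:E; simpl; [reflexivity|].
  apply count11_false.
Qed.

Lemma r_double1 n : r (2 * n + 1) = (r n + n mod 2)%nat.
Proof.
  unfold r, bits. rewrite Nat2N.inj_add, Nat2N.inj_mul.
  destruct (N.of_nat n) eqn:E.
  - assert (n = 0%nat) by lia. subst. reflexivity.
  - change ((2 * N.pos p + N.of_nat 1)%N) with (N.pos (xI p)).
    change (count11 (true :: pbits p) = (count11 (pbits p) + n mod 2)%nat).
    rewrite head_pbits. assert (n = Pos.to_nat p) by lia. subst. lia.
Qed.

Definition pz (s : nat) : Z := Z.of_nat (s mod 2).

Lemma mod2a x m : ((2 * m + x) mod 2 = x mod 2)%nat.
Proof. replace (2 * m + x)%nat with (x + m * 2)%nat by lia. apply Nat.Div0.mod_add. Qed.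
Lemma mod2b x : ((x + 1) mod 2 = 1 - x mod 2)%nat.
Proof. destruct (Nat.Even_or_Odd x) as [[k ->]|[k ->]].
  - rewrite (mod2a 1 k). replace (2 * k)%nat with (2 * k + 0)%nat by lia. rewrite mod2a. reflexivity.
  - replace (2 * k + 1 + 1)%nat with (2 * (k+1) + 0)%nat by lia. rewrite !mod2a. reflexivity. Qed.
Lemma mod2r x : (x mod 2 <= 1)%nat.
Proof. pose proof (Nat.mod_upper_bound x 2). lia. Qed.

Ltac fl := rewrite ?Nat.Div0.mod_0_l in *; try (replace (1 mod 2)%nat with 1%nat in * by reflexivity); lia.
Ltac rr := repeat (rewrite r_double1 || rewrite r_double).

Lemma dA0 s m : d (2 * s) (2 * (2 * m)) = d s (2 * m).
Proof. unfold d. replace (2 * (2 * m) + 2 * s)%nat with (2 * (2 * m + s))%nat by lia. rr. reflexivity. Qed.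
Lemma dA1 s m : d (2 * s) (2 * (2 * m + 1)) = d s (2 * m + 1).
Proof. unfold d. replace (2 * (2 * m + 1) + 2 * s)%nat with (2 * (2 * m + 1 + s))%nat by lia. rr. reflexivity. Qed.
Lemma dB0 s m : d (2 * s) (2 * (2 * m) + 1) = (d s (2 * m) + pz s)%Z.
Proof. unfold d, pz. replace (2 * (2 * m) + 1 + 2 * s)%nat with (2 * (2 * m + s) + 1)%nat by lia. rr.
  pose proof (mod2a s m); pose proof (mod2a 0 m); rewrite Nat.add_0_r in *; pose proof (mod2r s); fl. Qed.
Lemma dB1 s m : d (2 * s) (2 * (2 * m + 1) + 1) = (d s (2 * m + 1) - pz s)%Z.
Proof. unfold d, pz. replace (2 * (2 * m + 1) + 1 + 2 * s)%nat with (2 * (2 * m + 1 + s) + 1)%nat by lia. rr.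
  replace (2 * m + 1 + s)%nat with (2 * m + (s + 1))%nat by lia.
  pose proof (mod2a (s + 1) m); pose proof (mod2a 1 m); pose proof (mod2b s); pose proof (mod2r s); fl. Qed.
Lemma dC0 s m : d (2 * s + 1) (2 * (2 * m)) = (d s (2 * m) + pz s)%Z.
Proof. unfold d, pz. replace (2 * (2 * m) + (2 * s + 1))%nat with (2 * (2 * m + s) + 1)%nat by lia. rr.
  pose proof (mod2a s m); pose proof (mod2a 0 m); rewrite Nat.add_0_r in *; pose proof (mod2r s); fl. Qed.
Lemma dC1 s m : d (2 * s + 1) (2 * (2 * m + 1)) = (d s (2 * m + 1) + (1 - pz s))%Z.
Proof. unfold d, pz. replace (2 * (2 * m + 1) + (2 * s + 1))%nat with (2 * (2 * m + 1 + s) + 1)%nat by lia. rr.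
  replace (2 * m + 1 + s)%nat with (2 * m + (s + 1))%nat by lia.
  pose proof (mod2a (s + 1) m); pose proof (mod2a 1 m); pose proof (mod2b s); pose proof (mod2r s); fl. Qed.
Lemma dD0 s m : d (2 * s + 1) (2 * (2 * m) + 1) = d (s + 1) (2 * m).
Proof. unfold d. replace (2 * (2 * m) + 1 + (2 * s + 1))%nat with (2 * (2 * m + (s + 1)))%nat by lia. rr. pose proof (mod2a 0 m); rewrite Nat.add_0_r in *; fl. Qed.
Lemma dD1 s m : d (2 * s + 1) (2 * (2 * m + 1) + 1) = (d (s + 1) (2 * m + 1) - 1)%Z.
Proof. unfold d. replace (2 * (2 * m + 1) + 1 + (2 * s + 1))%nat with (2 * (2 * m + 1 + (s + 1)))%nat by lia. rr.
  pose proof (mod2a 1 m); fl. Qed.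

Definition cnt (P : nat -> bool) (N : nat) : nat := length (filter P (seq 0 N)).
Definition Dens (P : nat -> bool) (x : R) : Prop :=
  is_lim_seq (fun N => INR (length (filter P (seq 0 N))) / INR N) x.

Lemma Dens_eq P x : Dens P x -> density P = x.
Proof. intro H. unfold density. apply is_lim_seq_unique in H. rewrite H. reflexivity. Qed.

Lemma cnt_S P n : cnt P (S n) = (cnt P n + if P n then 1 else 0)%nat.
Proof. unfold cnt. rewrite seq_S, filter_app, length_app. simpl. destruct (P n); reflexivity. Qed.

Lemma cnt_le P n : (cnt P n <= n)%nat.
Proof. induction n; [unfold cnt; simpl; lia|]. rewrite cnt_S. destruct (P n); lia. Qed.

Lemma cnt_ext P Q n : (forall m, P m = Q m) -> cnt P n = cnt Q n.
Proof. intro H. unfold cnt. f_equal. apply filter_ext. exact H. Qed.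

Lemma cnt_split P N : cnt P (2 * N) = (cnt (fun m => P (2 * m)%nat) N + cnt (fun m => P (2 * m + 1)%nat) N)%nat.
Proof.
  induction N; [reflexivity|].
  replace (2 * S N)%nat with (S (S (2 * N))) by lia.
  rewrite !cnt_S, IHN. replace (S (2 * N)) with (2 * N + 1)%nat by lia.
  destruct (P (2 * N)%nat), (P (2 * N + 1)%nat); lia.
Qed.

Lemma cnt_split1 P N : cnt P (2 * N + 1) = (cnt (fun m => P (2 * m)%nat) (N + 1) + cnt (fun m => P (2 * m + 1)%nat) N)%nat.
Proof.
  replace (2 * N + 1)%nat with (S (2 * N)) by lia. replace (N + 1)%nat with (S N) by lia.
  rewrite (cnt_S P), cnt_split, (cnt_S (fun m => P (2 * m)%nat)). destruct (P (2 * N)%nat); lia.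
Qed.

Lemma cnt_true N : cnt (fun _ => true) N = N.
Proof. induction N; [reflexivity|]. rewrite cnt_S. lia. Qed.
Lemma cnt_false N : cnt (fun _ => false) N = 0%nat.
Proof. induction N; [reflexivity|]. rewrite cnt_S. lia. Qed.

Lemma Dens_ext P Q x : (forall m, P m = Q m) -> Dens P x -> Dens Q x.
Proof.
  intros H HP. unfold Dens. eapply is_lim_seq_ext; [|exact HP]. intro n. simpl.
  fold (cnt P n) (cnt Q n). rewrite (cnt_ext P Q n H). reflexivity.
Qed.

Lemma Dens_true : Dens (fun _ => true) 1.
Proof.
  unfold Dens. apply is_lim_seq_ext_loc with (fun _ => 1).
  - exists 1%nat. intros n Hn. fold (cnt (fun _ => true) n). rewrite cnt_true. field. apply not_0_INR. lia.
  - apply is_lim_seq_const.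
Qed.

Lemma Dens_false : Dens (fun _ => false) 0.
Proof.
  unfold Dens. apply is_lim_seq_ext with (fun _ => 0).
  - intro n. fold (cnt (fun _ => false) n). rewrite cnt_false. simpl. unfold Rdiv. ring.
  - apply is_lim_seq_const.
Qed.

Lemma aux_split (ce co h e x y eps : R) : 0 < eps -> 1 <= h -> (e = 0 \/ e = 1) ->
  Rabs (ce / (h + e) - x) < eps / 2 -> Rabs (co / h - y) < eps / 2 ->
  Rabs (x - y) / eps < 2 * h + e ->
  Rabs ((ce + co) / (2 * h + e) - (x + y) / 2) < eps.
Proof.
  intros Heps Hh He H1 H2 H3.
  set (ue := ce / (h + e)). set (uo := co / h).
  assert (Hce : ce = ue * (h + e)) by (unfold ue; field; destruct He; lra).
  assert (Hco : co = uo * h) by (unfold uo; field; lra).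
  replace ((ce + co) / (2 * h + e) - (x + y) / 2)
    with (((h + e) * (ue - x) + h * (uo - y) + e * (x - y) / 2) / (2 * h + e))
    by (rewrite Hce, Hco; field; destruct He; lra).
  assert (Hn : 0 < 2 * h + e) by (destruct He; lra).
  unfold Rdiv at 1. rewrite Rabs_mult, Rabs_inv, (Rabs_right (2 * h + e)) by lra.
  apply Rmult_lt_reg_r with (2 * h + e); [lra|].
  rewrite Rmult_assoc, Rinv_l, Rmult_1_r by lra.
  eapply Rle_lt_trans; [apply Rabs_triang|].
  eapply Rle_lt_trans; [apply Rplus_le_compat_r; apply Rabs_triang|].
  rewrite !Rabs_mult. rewrite (Rabs_right (h + e)), (Rabs_right h) by (destruct He; lra).
  assert (Rabs (e * (x - y) / 2) <= Rabs (x - y) / 2).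
  { unfold Rdiv. rewrite !Rabs_mult, Rabs_inv, (Rabs_right 2) by lra.
    destruct He as [-> | ->]; [rewrite Rabs_R0 | rewrite Rabs_R1]; pose proof (Rabs_pos (x - y)); lra. }
  assert (Rabs (x - y) < eps * (2 * h + e)).
  { apply Rmult_lt_reg_r with (/ eps); [apply Rinv_0_lt_compat; lra|].
    rewrite (Rmult_comm eps), Rmult_assoc, Rinv_r, Rmult_1_r by lra. exact H3. }
  assert ((h + e) * Rabs (ue - x) <= (h + e) * (eps / 2)). { apply Rmult_le_compat_l. destruct He; lra. unfold ue; lra. }
  assert (h * Rabs (uo - y) <= h * (eps / 2)) by (apply Rmult_le_compat_l; [lra| unfold uo; lra]).
  nra.
Qed.

Lemma Dens_split P x y : Dens (fun m => P (2 * m)%nat) x -> Dens (fun m => P (2 * m + 1)%nat) y ->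
  Dens P ((x + y) / 2).
Proof.
  unfold Dens. intros He Ho. apply is_lim_seq_Reals in He, Ho. apply is_lim_seq_Reals.
  intros eps Heps.
  destruct (He (eps / 2) ltac:(lra)) as [N1 HN1]. destruct (Ho (eps / 2) ltac:(lra)) as [N2 HN2].
  destruct (INR_unbounded (Rabs (x - y) / eps)) as [K HK].
  exists (2 * (N1 + N2 + K) + 2)%nat. intros n Hn. unfold R_dist.
  change (length (filter P (seq 0 n))) with (cnt P n).
  destruct (Nat.Even_or_Odd n) as [[h ->]|[h ->]].
  - rewrite cnt_split, plus_INR, mult_INR.
    replace (INR 2 * INR h) with (2 * INR h + 0) by (simpl; ring).
    apply aux_split; auto.
    + replace 1 with (INR 1) by reflexivity. apply le_INR. lia.
    + rewrite Rplus_0_r. specialize (HN1 h ltac:(lia)). exact HN1.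
    + exact (HN2 h ltac:(lia)).
    + assert (INR K <= INR h) by (apply le_INR; lia). pose proof (pos_INR h). lra.
  - rewrite cnt_split1, plus_INR, plus_INR, mult_INR.
    replace (INR 2 * INR h + INR 1) with (2 * INR h + 1) by (simpl; ring).
    apply aux_split; auto.
    + replace 1 with (INR 1) by reflexivity. apply le_INR. lia.
    + specialize (HN1 (h + 1)%nat ltac:(lia)). rewrite plus_INR in HN1. exact HN1.
    + exact (HN2 h ltac:(lia)).
    + assert (INR K <= INR h) by (apply le_INR; lia). pose proof (pos_INR h). lra.
Qed.

Definition bR (b : bool) : R := if b then 1 else 0.

Lemma cnt_per (Q : nat -> bool) (b0 b1 : bool) M : (forall m, Q (2 * m)%nat = b0) -> (forall m, Q (2 * m + 1)%nat = b1) ->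
  Rabs (INR (cnt Q M) - (bR b0 + bR b1) / 2 * INR M) <= 1/2.
Proof.
  intros H0 H1.
  assert (Hc : forall (b : bool) n, INR (cnt (fun _ => b) n) = bR b * INR n).
  { intros [|] n; unfold bR; [rewrite cnt_true | rewrite cnt_false]; simpl; ring. }
  destruct (Nat.Even_or_Odd M) as [[h ->]|[h ->]].
  - rewrite cnt_split. rewrite (cnt_ext _ (fun _ => b0) h H0), (cnt_ext _ (fun _ => b1) h H1).
    rewrite plus_INR, !Hc, mult_INR.
    match goal with |- Rabs ?e <= _ => replace e with 0 by (simpl; field) end.
    rewrite Rabs_R0; lra.
  - rewrite cnt_split1. rewrite (cnt_ext _ (fun _ => b0) (h + 1) H0), (cnt_ext _ (fun _ => b1) h H1).
    rewrite plus_INR, !Hc, !plus_INR, mult_INR.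
    match goal with |- Rabs ?e <= _ => replace e with ((bR b0 - bR b1) / 2) by (simpl; field) end.
    apply Rabs_le. destruct b0, b1; unfold bR; lra.
Qed.

Definition a1f (k : Z) : R := if orb (k =? 0)%Z (k =? 1)%Z then 1/2 else 0.
Definition beta1 (k : Z) : R :=
  if (2 <=? k)%Z then 0 else if (k =? 1)%Z then 1/4 else 3 / 2 ^ (Z.to_nat (3 - k)).

Lemma beta1_rec k : beta1 k = (a1f k + beta1 (k + 1)) / 2.
Proof.
  unfold beta1, a1f.
  destruct (2 <=? k)%Z eqn:E1.
  - apply Z.leb_le in E1. replace (2 <=? k + 1)%Z with true by (symmetry; apply Z.leb_le; lia).
    replace (k =? 0)%Z with false by (symmetry; apply Z.eqb_neq; lia).
    replace (k =? 1)%Z with false by (symmetry; apply Z.eqb_neq; lia). simpl. field.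
  - apply Z.leb_gt in E1. destruct (Z.eq_dec k 1) as [->|Hk1]; [simpl; field|].
    replace (k =? 1)%Z with false by (symmetry; apply Z.eqb_neq; lia).
    destruct (Z.eq_dec k 0) as [->|Hk0]; [simpl; field|].
    replace (k =? 0)%Z with false by (symmetry; apply Z.eqb_neq; lia).
    replace (2 <=? k + 1)%Z with false by (symmetry; apply Z.leb_gt; lia).
    replace (k + 1 =? 1)%Z with false by (symmetry; apply Z.eqb_neq; lia).
    replace (Z.to_nat (3 - k)) with (S (Z.to_nat (3 - (k + 1)))) by lia.
    set (n0 := Z.to_nat (3 - (k + 1))). cbn [orb]. change (2 ^ S n0) with (2 * 2 ^ n0). field. apply pow_nonzero. lra.
Qed.

Lemma beta1_bnd k : 0 <= beta1 k <= 1.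
Proof.
  unfold beta1. destruct (2 <=? k)%Z eqn:E1; [lra|]. destruct (k =? 1)%Z eqn:E2; [lra|].
  apply Z.leb_gt in E1. apply Z.eqb_neq in E2.
  assert (Hp : 4 <= 2 ^ Z.to_nat (3 - k)).
  { replace (Z.to_nat (3 - k)) with (S (S (Z.to_nat (1 - k)))) by lia.
    rewrite <- !tech_pow_Rmult. assert (1 <= 2 ^ Z.to_nat (1 - k)) by (apply pow_R1_Rle; lra). lra. }
  split; [unfold Rdiv; apply Rmult_le_pos; [lra| left; apply Rinv_0_lt_compat; lra]|].
  apply Rmult_le_reg_r with (2 ^ Z.to_nat (3 - k)); [lra|]. unfold Rdiv. rewrite Rmult_assoc, Rinv_l by lra. lra.
Qed.

Definition BP (k : Z) (n : nat) : bool := Z.eqb (d 1 (2 * n + 1)) k.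
Definition Qa (k : Z) (m : nat) : bool := Z.eqb (Z.of_nat (m mod 2)) k.

Lemma d1_even m : d 1 (2 * m) = Z.of_nat (m mod 2).
Proof. unfold d. rewrite r_double1, r_double. lia. Qed.

Lemma BP_even k m : BP k (2 * m) = Qa k m.
Proof. unfold BP, Qa. pose proof (dD0 0 m) as H. simpl (2 * 0 + 1)%nat in H. simpl (0 + 1)%nat in H.
  rewrite H, d1_even. reflexivity. Qed.
Lemma BP_odd k m : BP k (2 * m + 1) = BP (k + 1) m.
Proof. unfold BP. pose proof (dD1 0 m) as H. simpl (2 * 0 + 1)%nat in H. simpl (0 + 1)%nat in H.
  rewrite H. destruct (Z.eqb_spec (d 1 (2 * m + 1) - 1) k), (Z.eqb_spec (d 1 (2 * m + 1)) (k + 1)); auto; lia. Qed.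

Lemma Qa_bound k M : Rabs (INR (cnt (Qa k) M) - a1f k * INR M) <= 1/2.
Proof.
  replace (a1f k) with ((bR (Z.eqb 0 k) + bR (Z.eqb 1 k)) / 2).
  - apply cnt_per; intro m; unfold Qa.
    + rewrite Nat.mul_comm, Nat.Div0.mod_mul. reflexivity.
    + rewrite (Nat.add_comm (2 * m)), Nat.add_comm, mod2a. reflexivity.
  - unfold a1f, bR. destruct (Z.eqb_spec 0 k), (Z.eqb_spec 1 k), (Z.eqb_spec k 0), (Z.eqb_spec k 1); simpl; try lia; field.
Qed.

Lemma berr j : forall k N, Rabs (INR (cnt (BP k) N) - beta1 k * INR N) <= 2 * INR j + 2 * INR N / 2 ^ j.
Proof.
  induction j as [|j IH]; intros k N.
  - simpl. pose proof (cnt_le (BP k) N) as H. apply le_INR in H. pose proof (pos_INR (cnt (BP k) N)).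
    pose proof (beta1_bnd k). pose proof (pos_INR N). apply Rabs_le.
    assert (beta1 k * INR N <= INR N) by nra. assert (0 <= beta1 k * INR N) by nra. lra.
  - assert (Hs : forall h e, (e = 0 \/ e = 1)%nat -> (cnt (BP k) (2 * h + e) = cnt (Qa k) (h + e) + cnt (BP (k + 1)) h)%nat).
    { intros h e [-> | ->].
      - rewrite !Nat.add_0_r, cnt_split. f_equal; apply cnt_ext; intro m; [apply BP_even | apply BP_odd].
      - rewrite cnt_split1. f_equal; apply cnt_ext; intro m; [apply BP_even | apply BP_odd]. }
    assert (Hgen : forall h (e : nat), (e = 0 \/ e = 1)%nat -> N = (2 * h + e)%nat ->
      Rabs (INR (cnt (BP k) N) - beta1 k * INR N) <= 2 * INR (S j) + 2 * INR N / 2 ^ S j).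
    { intros h e He ->. rewrite Hs by exact He. rewrite plus_INR.
      pose proof (Qa_bound k (h + e)) as H1. pose proof (IH (k + 1)%Z h) as H2.
      rewrite beta1_rec. rewrite !plus_INR, mult_INR in *. replace (INR 2) with 2 in * by (simpl; ring). rewrite S_INR.
      pose proof (beta1_bnd (k + 1)). 
      assert (Ha : 0 <= a1f k <= 1/2) by (unfold a1f; destruct orb; lra).
      assert (HE : INR e = 0 \/ INR e = 1) by (destruct He as [-> | ->]; simpl; auto).
      set (A := INR (cnt (Qa k) (h + e))) in *. set (B := INR (cnt (BP (k + 1)) h)) in *.
      set (Hh := INR h) in *. set (E := INR e) in *.
      assert (Hpj : 0 < 2 ^ j) by (apply pow_lt; lra).
      replace (2 * (2 * Hh + E) / 2 ^ S j) with (2 * Hh / 2 ^ j + E / 2 ^ j) by (simpl; field; lra).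
      assert (0 <= E / 2 ^ j) by (unfold Rdiv; apply Rmult_le_pos; [destruct HE; lra | left; apply Rinv_0_lt_compat; lra]).
      replace (A + B - (a1f k + beta1 (k + 1)) / 2 * (2 * Hh + E))
        with ((A - a1f k * (Hh + E)) + a1f k * (E / 2) + (B - beta1 (k + 1) * Hh) - beta1 (k + 1) * (E / 2)) by (simpl; field).
      apply absle in H1. apply absle in H2. apply Rabs_le.
      assert (0 <= a1f k * (E / 2) <= 1/4) by (destruct HE as [-> | ->]; nra).
      assert (0 <= beta1 (k + 1) * (E / 2) <= 1/2) by (destruct HE as [-> | ->]; nra).
      lra. }
    destruct (Nat.Even_or_Odd N) as [[h ->]|[h ->]].
    + apply (Hgen h 0%nat); [left; reflexivity| lia].
    + apply (Hgen h 1%nat); [right; reflexivity| lia].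
Qed.

Lemma INR_le_pow2 j : INR j <= 2 ^ j.
Proof. induction j; [simpl; lra|]. rewrite S_INR. simpl. pose proof (pow_R1_Rle 2 j ltac:(lra)). lra. Qed.

Lemma Dens_BP k : Dens (BP k) (beta1 k).
Proof.
  unfold Dens. apply is_lim_seq_Reals. intros eps Heps.
  destruct (INR_unbounded (4 / eps)) as [j Hj].
  assert (H4e : 0 < 4 / eps) by (unfold Rdiv; apply Rmult_lt_0_compat; [lra| apply Rinv_0_lt_compat; lra]).
  assert (Hjp : 0 < INR j) by lra.
  pose proof (INR_le_pow2 j) as Hpj.
  assert (Hg : 2 / 2 ^ j < eps / 2).
  { apply Rle_lt_trans with (2 / INR j).
    - unfold Rdiv. apply Rmult_le_compat_l; [lra|]. apply Rinv_le_contravar; lra.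
    - apply Rmult_lt_reg_r with (INR j); [lra|]. unfold Rdiv. rewrite Rmult_assoc, Rinv_l by lra.
      apply Rmult_lt_reg_l with (/ eps * 2); [apply Rmult_lt_0_compat; [apply Rinv_0_lt_compat|]; lra|].
      replace (/ eps * 2 * (2 * 1)) with (4 / eps) by (field; lra).
      replace (/ eps * 2 * (eps * / 2 * INR j)) with (INR j) by (field; lra). lra. }
  destruct (INR_unbounded (4 * INR j / eps)) as [N0 HN0].
  exists (S N0). intros n Hn. unfold R_dist.
  change (length (filter (BP k) (seq 0 n))) with (cnt (BP k) n).
  assert (Hn0 : INR N0 < INR n) by (apply lt_INR; lia).
  assert (Hnp : 0 < INR n) by (pose proof (pos_INR N0); lra).
  pose proof (berr j k n) as Hb.
  replace (INR (cnt (BP k) n) / INR n - beta1 k) with ((INR (cnt (BP k) n) - beta1 k * INR n) / INR n) by (field; lra).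
  unfold Rdiv at 1. rewrite Rabs_mult, Rabs_inv, (Rabs_right (INR n)) by lra.
  apply Rle_lt_trans with ((2 * INR j + 2 * INR n / 2 ^ j) * / INR n).
  { apply Rmult_le_compat_r; [left; apply Rinv_0_lt_compat; lra| exact Hb]. }
  replace ((2 * INR j + 2 * INR n / 2 ^ j) * / INR n) with (2 * INR j / INR n + 2 / 2 ^ j)
    by (field; split; [lra| apply pow_nonzero; lra]).
  assert (2 * INR j / INR n < eps / 2).
  { apply Rmult_lt_reg_r with (INR n); [lra|]. unfold Rdiv. rewrite Rmult_assoc, Rinv_l by lra.
    assert (4 * INR j < eps * INR n).
    { apply Rmult_lt_reg_r with (/ eps); [apply Rinv_0_lt_compat; lra|].
      replace (eps * INR n * / eps) with (INR n) by (field; lra). unfold Rdiv in HN0. lra. }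
    lra. }
  lra.
Qed.

Definition Ap (t : nat) (k : Z) (n : nat) : bool := Z.eqb (d t (2 * n)) k.
Definition Bp (t : nat) (k : Z) (n : nat) : bool := Z.eqb (d t (2 * n + 1)) k.

Lemma eqb_shift (x c k : Z) : Z.eqb (x + c) k = Z.eqb x (k - c).
Proof. destruct (Z.eqb_spec (x + c) k), (Z.eqb_spec x (k - c)); auto; lia. Qed.

Lemma LA2 s k xa xb : Dens (Ap s k) xa -> Dens (Bp s k) xb -> Dens (Ap (2 * s) k) ((xa + xb) / 2).
Proof.
  intros Ha Hb. apply Dens_split.
  - eapply Dens_ext; [|exact Ha]. intro m. unfold Ap. rewrite dA0. reflexivity.
  - eapply Dens_ext; [|exact Hb]. intro m. unfold Ap, Bp. rewrite dA1. reflexivity.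
Qed.
Lemma LB2 s k xa xb : Dens (Ap s (k - pz s)) xa -> Dens (Bp s (k + pz s)) xb -> Dens (Bp (2 * s) k) ((xa + xb) / 2).
Proof.
  intros Ha Hb. apply Dens_split.
  - eapply Dens_ext; [|exact Ha]. intro m. unfold Ap, Bp. rewrite dB0, eqb_shift. reflexivity.
  - eapply Dens_ext; [|exact Hb]. intro m. unfold Bp. rewrite dB1. unfold Z.sub at 1. rewrite eqb_shift.
    f_equal; try lia.
Qed.
Lemma LA3 s k xa xb : Dens (Ap s (k - pz s)) xa -> Dens (Bp s (k - (1 - pz s))) xb -> Dens (Ap (2 * s + 1) k) ((xa + xb) / 2).
Proof.
  intros Ha Hb. apply Dens_split.
  - eapply Dens_ext; [|exact Ha]. intro m. unfold Ap. rewrite dC0, eqb_shift. reflexivity.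
  - eapply Dens_ext; [|exact Hb]. intro m. unfold Ap, Bp. rewrite dC1, eqb_shift. reflexivity.
Qed.
Lemma LB3 s k xa xb : Dens (Ap (s + 1) k) xa -> Dens (Bp (s + 1) (k + 1)) xb -> Dens (Bp (2 * s + 1) k) ((xa + xb) / 2).
Proof.
  intros Ha Hb. apply Dens_split.
  - eapply Dens_ext; [|exact Ha]. intro m. unfold Ap, Bp. rewrite dD0. reflexivity.
  - eapply Dens_ext; [|exact Hb]. intro m. unfold Bp. rewrite dD1. unfold Z.sub at 1. rewrite eqb_shift.
    f_equal; try lia.
Qed.

Lemma Dens_self P x : Dens P x -> Dens P (density P).
Proof. intro H. rewrite (Dens_eq P x H). exact H. Qed.

Lemma d0 n : d 0 n = 0%Z.
Proof. unfold d. rewrite Nat.add_0_r. lia. Qed.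

Definition delta0 (k : Z) : R := if Z.eqb 0 k then 1 else 0.

Lemma Dens0A k : Dens (Ap 0 k) (delta0 k).
Proof. unfold delta0. destruct (Z.eqb 0 k) eqn:E.
  - eapply Dens_ext; [|exact Dens_true]. intro m. unfold Ap. rewrite d0. auto.
  - eapply Dens_ext; [|exact Dens_false]. intro m. unfold Ap. rewrite d0. auto. Qed.
Lemma Dens0B k : Dens (Bp 0 k) (delta0 k).
Proof. unfold delta0. destruct (Z.eqb 0 k) eqn:E.
  - eapply Dens_ext; [|exact Dens_true]. intro m. unfold Bp. rewrite d0. auto.
  - eapply Dens_ext; [|exact Dens_false]. intro m. unfold Bp. rewrite d0. auto. Qed.

Lemma DensAll : forall t, (forall k, Dens (Ap t k) (a_dens t k)) /\ (forall k, Dens (Bp t k) (b_dens t k)).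
Proof.
  intro t. induction t as [t IH] using (well_founded_induction lt_wf).
  unfold a_dens, b_dens. fold (Ap t) (Bp t).
  destruct (Nat.eq_dec t 0) as [->|Ht0].
  { split; intro k; eapply Dens_self; [apply Dens0A | apply Dens0B]. }
  destruct (Nat.Even_or_Odd t) as [[s ->]|[s ->]].
  - destruct (IH s ltac:(lia)) as [IA IB].
    split; intro k; eapply Dens_self; [apply LA2 | apply LB2]; auto.
  - destruct (IH s ltac:(lia)) as [IA IB].
    split; intro k; [eapply Dens_self; apply LA3; auto|].
    destruct (Nat.eq_dec s 0) as [->|Hs0].
    + simpl. eapply Dens_self. exact (Dens_BP k).
    + destruct (IH (s + 1)%nat ltac:(lia)) as [IA' IB']. eapply Dens_self. apply LB3; auto.
Qed.

Lemma RA2 s k : a_dens (2 * s) k = (a_dens s k + b_dens s k) / 2.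
Proof. destruct (DensAll s). apply Dens_eq. apply LA2; auto. Qed.
Lemma RB2 s k : b_dens (2 * s) k = (a_dens s (k - pz s) + b_dens s (k + pz s)) / 2.
Proof. destruct (DensAll s). apply Dens_eq. apply LB2; auto. Qed.
Lemma RA3 s k : a_dens (2 * s + 1) k = (a_dens s (k - pz s) + b_dens s (k - (1 - pz s))) / 2.
Proof. destruct (DensAll s). apply Dens_eq. apply LA3; auto. Qed.
Lemma RB3 s k : b_dens (2 * s + 1) k = (a_dens (s + 1) k + b_dens (s + 1) (k + 1)) / 2.
Proof. destruct (DensAll (s + 1)). apply Dens_eq. apply LB3; auto. Qed.
Lemma R0A k : a_dens 0 k = delta0 k.
Proof. apply Dens_eq, Dens0A. Qed.
Lemma R0B k : b_dens 0 k = delta0 k.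
Proof. apply Dens_eq, Dens0B. Qed.
Lemma R1B k : b_dens 1 k = beta1 k.
Proof. apply Dens_eq, Dens_BP. Qed.

Lemma ser0 : is_series (fun _ : nat => 0) 0.
Proof.
  assert (H : Rabs (1/2) < 1) by (rewrite Rabs_right; lra).
  pose proof (is_series_scal_r 0 _ _ (is_series_geom (1/2) H)) as H0.
  rewrite Rmult_0_r in H0. eapply is_series_ext; [|exact H0]. intro n. simpl. ring.
Qed.

Lemma ex_ser0 : ex_series (fun _ : nat => 0).
Proof. eexists; apply ser0. Qed.
Lemma Series0 : Series (fun _ : nat => 0) = 0.
Proof. apply is_series_unique, ser0. Qed.

Lemma ex_series_plus' (a b : nat -> R) : ex_series a -> ex_series b -> ex_series (fun n => a n + b n).
Proof. intros. apply (ex_series_plus a b); auto. Qed.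
Lemma ex_series_scal' (c : R) (a : nat -> R) : ex_series a -> ex_series (fun n => c * a n).
Proof. intros. apply (ex_series_scal_l c a); auto. Qed.

Definition ZS (f : Z -> R) : Prop :=
  ex_series (fun j => f (Z.of_nat j)) /\ ex_series (fun j => f (- Z.of_nat (S j))%Z).

Lemma zsum_ext f g : (forall k, f k = g k) -> zsum f = zsum g.
Proof. intro H. unfold zsum. f_equal; apply Series_ext; intro; apply H. Qed.
Lemma ZS_ext f g : (forall k, f k = g k) -> ZS f -> ZS g.
Proof. intros H [H1 H2]. split; [eapply ex_series_ext; [|exact H1] | eapply ex_series_ext; [|exact H2]]; intro; apply H. Qed.

Lemma ZS_plus f g : ZS f -> ZS g -> ZS (fun k => f k + g k).
Proof. intros [H1 H2] [H3 H4]. split; apply ex_series_plus'; auto. Qed.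
Lemma zsum_plus f g : ZS f -> ZS g -> zsum (fun k => f k + g k) = zsum f + zsum g.
Proof. intros [H1 H2] [H3 H4]. unfold zsum. rewrite !Series_plus by auto. ring. Qed.
Lemma ZS_scal c f : ZS f -> ZS (fun k => c * f k).
Proof. intros [H1 H2]. split; apply ex_series_scal'; auto. Qed.
Lemma zsum_scal c f : zsum (fun k => c * f k) = c * zsum f.
Proof. unfold zsum. rewrite !Series_scal_l. ring. Qed.

Lemma ZS_shiftp f : ZS f -> ZS (fun k => f (k + 1)%Z) /\ zsum (fun k => f (k + 1)%Z) = zsum f.
Proof.
  intros [H1 H2].
  assert (E1 : ex_series (fun j => f (Z.of_nat j + 1)%Z)).
  { apply ex_series_incr_1 in H1. eapply ex_series_ext; [|exact H1]. intro n. cbv beta. f_equal. lia. }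
  assert (E2 : ex_series (fun j => f (- Z.of_nat (S j) + 1)%Z)).
  { apply ex_series_incr_1. eapply ex_series_ext; [|exact H2]. intro n. cbv beta. f_equal. lia. }
  split; [split; auto|].
  unfold zsum.
  rewrite (Series_incr_1 (fun j => f (Z.of_nat j)) H1).
  rewrite (Series_incr_1 (fun j => f (- Z.of_nat (S j) + 1)%Z) E2).
  replace (Series (fun j => f (Z.of_nat j + 1)%Z)) with (Series (fun k => f (Z.of_nat (S k)))) by (apply Series_ext; intro; f_equal; lia).
  replace (Series (fun k => f (- Z.of_nat (S (S k)) + 1)%Z)) with (Series (fun j => f (- Z.of_nat (S j))%Z)) by (apply Series_ext; intro; f_equal; lia).
  replace (f (- Z.of_nat 1 + 1)%Z) with (f (Z.of_nat 0)) by (f_equal; lia). ring.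
Qed.

Lemma ZS_shiftm f : ZS f -> ZS (fun k => f (k - 1)%Z) /\ zsum (fun k => f (k - 1)%Z) = zsum f.
Proof.
  intros [H1 H2].
  assert (E1 : ex_series (fun j => f (Z.of_nat j - 1)%Z)).
  { apply ex_series_incr_1. eapply ex_series_ext; [|exact H1]. intro n. cbv beta. f_equal. lia. }
  assert (E2 : ex_series (fun j => f (- Z.of_nat (S j) - 1)%Z)).
  { apply ex_series_incr_1 in H2. eapply ex_series_ext; [|exact H2]. intro n. cbv beta. f_equal. lia. }
  split; [split; auto|].
  unfold zsum.
  rewrite (Series_incr_1 (fun j => f (Z.of_nat j - 1)%Z) E1).
  rewrite (Series_incr_1 (fun j => f (- Z.of_nat (S j))%Z) H2).
  replace (Series (fun k => f (Z.of_nat (S k) - 1)%Z)) with (Series (fun j => f (Z.of_nat j))) by (apply Series_ext; intro; f_equal; lia).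
  replace (Series (fun j => f (- Z.of_nat (S j) - 1)%Z)) with (Series (fun k => f (- Z.of_nat (S (S k)))%Z)) by (apply Series_ext; intro; f_equal; lia).
  replace (f (Z.of_nat 0 - 1)%Z) with (f (- Z.of_nat 1)%Z) by (f_equal; lia). ring.
Qed.

Lemma ZS_shift f (c : Z) : (c = -1 \/ c = 0 \/ c = 1)%Z -> ZS f ->
  ZS (fun k => f (k - c)%Z) /\ zsum (fun k => f (k - c)%Z) = zsum f.
Proof.
  intros [-> | [-> | ->]] H.
  - destruct (ZS_shiftp f H) as [A B].
    assert (E : forall k, f (k + 1)%Z = f (k - -1)%Z) by (intro k; f_equal; lia).
    split; [exact (ZS_ext _ _ E A)|]. rewrite <- (zsum_ext _ _ E). exact B.
  - split; [eapply ZS_ext; [|exact H]| apply zsum_ext]; intro k; f_equal; lia.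
  - exact (ZS_shiftm f H).
Qed.

Definition Good (p : Z -> R) : Prop :=
  (forall k, 0 <= p k) /\ ZS p /\ ZS (fun k => IZR k * p k) /\ ZS (fun k => IZR k ^ 2 * p k) /\ zsum p = 1.
Definition M2 (p : Z -> R) : R := zsum (fun k => IZR k ^ 2 * p k).

Lemma var_parts p : Good p ->
  ZS (fun k => (IZR k - mean p) ^ 2 * p k) /\ variance p = M2 p - mean p ^ 2.
Proof.
  intros (Hn & H0 & H1 & H2 & Hs).
  set (mu := mean p).
  assert (E : forall k, (IZR k - mu) ^ 2 * p k = (IZR k ^ 2 * p k + (-2 * mu) * (IZR k * p k)) + mu ^ 2 * p k)
    by (intro; ring).
  assert (Z1 : ZS (fun k => IZR k ^ 2 * p k + (-2 * mu) * (IZR k * p k))) by (apply ZS_plus; [|apply ZS_scal]; auto).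
  assert (Z2 : ZS (fun k => mu ^ 2 * p k)) by (apply ZS_scal; auto).
  split.
  - eapply ZS_ext; [intro k; symmetry; apply E|]. apply ZS_plus; auto.
  - unfold variance. fold mu. rewrite (zsum_ext _ _ E). rewrite zsum_plus by auto.
    rewrite zsum_plus by (auto; apply ZS_scal; auto). rewrite !zsum_scal, Hs.
    unfold M2, mu, mean. ring.
Qed.

Lemma Series_nonneg (a : nat -> R) : ex_series a -> (forall n, 0 <= a n) -> 0 <= Series a.
Proof.
  intros He Hp. rewrite <- Series0. apply Series_le; auto. intro n; split; [lra| apply Hp].
Qed.

Lemma var_nonneg p : Good p -> 0 <= variance p.
Proof.
  intro G. destruct (var_parts p G) as [[A B] _]. destruct G as (Hn & _).
  unfold variance, zsum. apply Rplus_le_le_0_compat; apply Series_nonneg; auto;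
  intro n; apply Rmult_le_pos; first [apply pow2_ge_0 | apply Hn].
Qed.

Lemma shift_good q (c : Z) : (c = -1 \/ c = 0 \/ c = 1)%Z -> Good q ->
  Good (fun k => q (k - c)%Z) /\ mean (fun k => q (k - c)%Z) = mean q + IZR c /\
  M2 (fun k => q (k - c)%Z) = M2 q + 2 * IZR c * mean q + IZR c ^ 2.
Proof.
  intros Hc (Hn & H0 & H1 & H2 & Hs).
  destruct (ZS_shift _ c Hc H0) as [S0 T0].
  destruct (ZS_shift _ c Hc H1) as [S1 T1].
  destruct (ZS_shift _ c Hc H2) as [S2 T2].
  assert (E1 : forall k, IZR k * q (k - c)%Z = IZR (k - c) * q (k - c)%Z + IZR c * q (k - c)%Z)
    by (intro; rewrite minus_IZR; ring).
  assert (E2 : forall k, IZR k ^ 2 * q (k - c)%Z = (IZR (k - c) ^ 2 * q (k - c)%Z + (2 * IZR c) * (IZR (k - c) * q (k - c)%Z)) + IZR c ^ 2 * q (k - c)%Z)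
    by (intro; rewrite minus_IZR; ring).
  cbv beta in S1, S2, T1, T2.
  assert (Z1 : ZS (fun k => IZR k * q (k - c)%Z)).
  { eapply ZS_ext; [intro k; symmetry; apply E1|]. apply ZS_plus; [exact S1| apply ZS_scal; exact S0]. }
  assert (Z2 : ZS (fun k => IZR k ^ 2 * q (k - c)%Z)).
  { eapply ZS_ext; [intro k; symmetry; apply E2|]. apply ZS_plus; [apply ZS_plus|apply ZS_scal; exact S0]; [exact S2| apply ZS_scal; exact S1]. }
  split; [|split].
  - split; [intro; apply Hn|]. split; [exact S0|]. split; [exact Z1|]. split; [exact Z2|]. rewrite T0; exact Hs.
  - unfold mean. rewrite (zsum_ext _ _ E1), zsum_plus by (auto; apply ZS_scal; auto).
    rewrite zsum_scal, T1, T0, Hs. ring.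
  - unfold M2. rewrite (zsum_ext _ _ E2).
    rewrite zsum_plus by (try apply ZS_plus; try apply ZS_scal; auto).
    rewrite zsum_plus by (try apply ZS_scal; auto).
    rewrite !zsum_scal, T2, T1, T0, Hs. unfold mean. ring.
Qed.

Lemma mix_good g1 g2 p : Good g1 -> Good g2 -> (forall k, p k = (g1 k + g2 k) / 2) ->
  Good p /\ mean p = (mean g1 + mean g2) / 2 /\ M2 p = (M2 g1 + M2 g2) / 2.
Proof.
  intros (Hn1 & A0 & A1 & A2 & As) (Hn2 & B0 & B1 & B2 & Bs) Hp.
  assert (E0 : forall k, (/2) * g1 k + (/2) * g2 k = p k) by (intro; rewrite Hp; field).
  assert (E1 : forall k, (/2) * (IZR k * g1 k) + (/2) * (IZR k * g2 k) = IZR k * p k) by (intro; rewrite Hp; field).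
  assert (E2 : forall k, (/2) * (IZR k ^ 2 * g1 k) + (/2) * (IZR k ^ 2 * g2 k) = IZR k ^ 2 * p k) by (intro; rewrite Hp; field).
  assert (ZS0 : forall f1 f2, ZS f1 -> ZS f2 -> ZS (fun k => (/2) * f1 k + (/2) * f2 k)) by (intros; apply ZS_plus; apply ZS_scal; auto).
  assert (ZZ0 : forall f1 f2, ZS f1 -> ZS f2 -> zsum (fun k => (/2) * f1 k + (/2) * f2 k) = (zsum f1 + zsum f2) / 2).
  { intros. rewrite zsum_plus by (apply ZS_scal; auto). rewrite !zsum_scal. field. }
  split; [|split].
  - split; [intro k; rewrite Hp; specialize (Hn1 k); specialize (Hn2 k); lra|].
    split; [exact (ZS_ext _ _ E0 (ZS0 _ _ A0 B0))|].
    split; [exact (ZS_ext _ _ E1 (ZS0 _ _ A1 B1))|].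
    split; [exact (ZS_ext _ _ E2 (ZS0 _ _ A2 B2))|].
    rewrite <- (zsum_ext _ _ E0), ZZ0 by auto. rewrite As, Bs. field.
  - unfold mean. rewrite <- (zsum_ext _ _ E1), ZZ0 by auto. reflexivity.
  - unfold M2. rewrite <- (zsum_ext _ _ E2), ZZ0 by auto. reflexivity.
Qed.

Lemma mixture q1 q2 (c1 c2 : Z) p :
  (c1 = -1 \/ c1 = 0 \/ c1 = 1)%Z -> (c2 = -1 \/ c2 = 0 \/ c2 = 1)%Z ->
  Good q1 -> Good q2 -> (forall k, p k = (q1 (k - c1)%Z + q2 (k - c2)%Z) / 2) ->
  Good p /\ mean p = ((mean q1 + IZR c1) + (mean q2 + IZR c2)) / 2 /\
  variance p = (variance q1 + variance q2) / 2 + ((mean q1 + IZR c1 - (mean q2 + IZR c2)) / 2) ^ 2.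
Proof.
  intros Hc1 Hc2 G1 G2 Hp.
  destruct (shift_good q1 c1 Hc1 G1) as (G1' & m1 & s1).
  destruct (shift_good q2 c2 Hc2 G2) as (G2' & m2 & s2).
  destruct (mix_good _ _ p G1' G2' Hp) as (Gp & mp & sp).
  split; [exact Gp|]. split; [rewrite mp, m1, m2; reflexivity|].
  rewrite (proj2 (var_parts p Gp)), (proj2 (var_parts q1 G1)), (proj2 (var_parts q2 G2)).
  rewrite sp, s1, s2, mp, m1, m2. field.
Qed.

Lemma fin_series (a : nat -> R) (N0 : nat) : (forall n, (N0 <= n)%nat -> a n = 0) -> ex_series a.
Proof.
  intro H. apply (ex_series_incr_n a N0). eapply ex_series_ext; [|exact ex_ser0].
  intro n. symmetry. apply H. lia.
Qed.

Lemma ZS_zero f : (forall k, f k = 0) -> ZS f /\ zsum f = 0.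
Proof.
  intro H. split.
  - split; (eapply ex_series_ext; [|exact ex_ser0]); intro; symmetry; apply H.
  - unfold zsum. rewrite (Series_ext _ (fun _ => 0)) by (intro; apply H).
    rewrite (Series_ext (fun j => f (- Z.of_nat (S j))%Z) (fun _ => 0)) by (intro; apply H).
    rewrite Series0. ring.
Qed.

Lemma delta0_good : Good delta0 /\ mean delta0 = 0 /\ variance delta0 = 0.
Proof.
  assert (Z1 : forall k, IZR k * delta0 k = 0).
  { intro k. unfold delta0. destruct (Z.eqb_spec 0 k); [subst; simpl; ring | ring]. }
  assert (Z2 : forall k, IZR k ^ 2 * delta0 k = 0).
  { intro k. unfold delta0. destruct (Z.eqb_spec 0 k); [subst; simpl; ring | ring]. }
  destruct (ZS_zero _ Z1) as [A1 B1]. destruct (ZS_zero _ Z2) as [A2 B2].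
  assert (Hpos : forall n, delta0 (Z.of_nat (S n)) = 0).
  { intro n. unfold delta0. destruct (Z.eqb_spec 0 (Z.of_nat (S n))); [lia | reflexivity]. }
  assert (Hneg : forall n, delta0 (- Z.of_nat (S n))%Z = 0).
  { intro n. unfold delta0. destruct (Z.eqb_spec 0 (- Z.of_nat (S n))); [lia | reflexivity]. }
  assert (Ep : ex_series (fun j => delta0 (Z.of_nat j))).
  { apply (fin_series _ 1). intros n Hn. destruct n; [lia|]. apply Hpos. }
  assert (En : ex_series (fun j => delta0 (- Z.of_nat (S j))%Z)).
  { eapply ex_series_ext; [|exact ex_ser0]. intro; symmetry; apply Hneg. }
  assert (G : Good delta0).
  { split; [intro k; unfold delta0; destruct Z.eqb; lra|].
    split; [split; auto|]. split; [auto|]. split; [auto|].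
    unfold zsum. rewrite Series_incr_1 by exact Ep.
    rewrite (Series_ext _ (fun _ => 0)) by (intro; apply Hpos).
    rewrite (Series_ext (fun j => delta0 (- Z.of_nat (S j))%Z) (fun _ => 0)) by (intro; apply Hneg).
    rewrite Series0. simpl. unfold delta0. simpl. ring. }
  split; [exact G|]. split; [exact B1|].
  rewrite (proj2 (var_parts _ G)). unfold M2. rewrite B2. unfold mean. rewrite B1. ring.
Qed.

Lemma bern j : 1 + INR j / 4 <= (5/4) ^ j.
Proof.
  induction j; [simpl; lra|]. rewrite S_INR. simpl.
  assert (0 <= INR j) by apply pos_INR. nra.
Qed.

Lemma poly_geom j : (INR j + 1) ^ 2 * (1/2) ^ j <= 16 * (25/32) ^ j.
Proof.
  pose proof (bern j). assert (H0 : 0 <= INR j) by apply pos_INR.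
  assert (H1 : INR j + 1 <= 4 * (5/4) ^ j) by lra.
  assert (H2 : (INR j + 1) ^ 2 <= (4 * (5/4) ^ j) ^ 2) by (apply pow_incr; lra).
  replace (25/32) with ((5/4) * (5/4) * (1/2)) by field.
  rewrite !Rpow_mult_distr.
  assert (0 < (1/2) ^ j) by (apply pow_lt; lra).
  replace ((4 * (5/4) ^ j) ^ 2) with (16 * ((5/4) ^ j * (5/4) ^ j)) in H2 by ring.
  nra.
Qed.

Lemma ex_geom16 : ex_series (fun j => 16 * (25/32) ^ j).
Proof.
  apply ex_series_scal'. eexists. apply is_series_geom. rewrite Rabs_right; lra.
Qed.

Lemma beta1_neg j : beta1 (- Z.of_nat (S j))%Z = 3 / 16 * (1/2) ^ j.
Proof.
  unfold beta1.
  replace (2 <=? - Z.of_nat (S j))%Z with false by (symmetry; apply Z.leb_gt; lia).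
  replace (- Z.of_nat (S j) =? 1)%Z with false by (symmetry; apply Z.eqb_neq; lia).
  replace (Z.to_nat (3 - - Z.of_nat (S j))) with (j + 4)%nat by lia.
  rewrite pow_add. assert (Hp : 0 < 2 ^ j) by (apply pow_lt; lra).
  assert (Hh : (1/2) ^ j * 2 ^ j = 1) by (rewrite <- Rpow_mult_distr; replace (1/2*2) with 1 by field; apply pow1).
  simpl (2 ^ 4). field_simplify; [|lra]. 
  apply Rmult_eq_reg_r with (2 ^ j); [|lra]. field_simplify; [|lra]. 
  replace ((1/2) ^ j) with (/ 2 ^ j) by (apply Rmult_eq_reg_r with (2^j); [rewrite Hh, Rinv_l; lra| lra]).
  field. lra.
Qed.

Lemma beta1_pos n : (2 <= n)%nat -> beta1 (Z.of_nat n) = 0.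
Proof. intro H. unfold beta1. replace (2 <=? Z.of_nat n)%Z with true by (symmetry; apply Z.leb_le; lia). reflexivity. Qed.

Lemma beta1_ZS (i : nat) : (i <= 2)%nat -> ZS (fun k => IZR k ^ i * beta1 k).
Proof.
  intro Hi. split.
  - apply (fin_series _ 2). intros n Hn. rewrite beta1_pos by lia. ring.
  - apply (@ex_series_le R_AbsRing R_CompleteNormedModule _ (fun j => 16 * (25/32) ^ j)); [|exact ex_geom16].
    intro j. change (norm (IZR (- Z.of_nat (S j)) ^ i * beta1 (- Z.of_nat (S j))%Z)) with (Rabs (IZR (- Z.of_nat (S j)) ^ i * beta1 (- Z.of_nat (S j))%Z)).
    rewrite beta1_neg, opp_IZR, <- INR_IZR_INZ, S_INR.
    eapply Rle_trans; [|apply poly_geom].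
    rewrite Rabs_mult, <- RPow_abs, Rabs_Ropp, (Rabs_right (INR j + 1)) by (pose proof (pos_INR j); lra).
    assert (Hp : 0 < (1/2) ^ j) by (apply pow_lt; lra).
    rewrite Rabs_right by lra.
    assert (H1 : 1 <= INR j + 1) by (pose proof (pos_INR j); lra).
    assert (Hpi : (INR j + 1) ^ i <= (INR j + 1) ^ 2) by (apply Rle_pow; auto).
    assert (0 <= (INR j + 1) ^ i) by (apply pow_le; lra).
    nra.
Qed.

Lemma beta1_good : Good beta1.
Proof.
  pose proof (beta1_ZS 0 ltac:(lia)) as Z0. pose proof (beta1_ZS 1 ltac:(lia)) as Z1. pose proof (beta1_ZS 2 ltac:(lia)) as Z2.
  assert (E0 : forall k, IZR k ^ 0 * beta1 k = beta1 k) by (intro; simpl; ring).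
  assert (E1 : forall k, IZR k ^ 1 * beta1 k = IZR k * beta1 k) by (intro; simpl; ring).
  apply (ZS_ext _ _ E0) in Z0. apply (ZS_ext _ _ E1) in Z1.
  split; [intro; apply beta1_bnd|]. split; [exact Z0|]. split; [exact Z1|]. split; [exact Z2|].
  destruct Z0 as [P N].
  unfold zsum. rewrite Series_incr_1 by exact P.
  assert (P' : ex_series (fun k => beta1 (Z.of_nat (S k)))) by (apply ex_series_incr_1 in P; exact P).
  rewrite (Series_incr_1 _ P').
  rewrite (Series_ext (fun k => beta1 (Z.of_nat (S (S k)))) (fun _ => 0)) by (intro; apply beta1_pos; lia).
  rewrite Series0.
  rewrite (Series_ext _ (fun j => 3 / 16 * (1/2) ^ j)) by (intro; apply beta1_neg).
  rewrite Series_scal_l. rewrite (is_series_unique _ 2).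
  - unfold beta1. simpl. field.
  - assert (Hq : Rabs (1/2) < 1) by (rewrite Rabs_right; lra). pose proof (is_series_geom (1/2) Hq) as G. replace (/ (1 - 1/2)) with 2 in G by field. exact G.
Qed.

Lemma Good_ext p q : (forall k, p k = q k) -> Good p -> Good q.
Proof.
  intros H (Hn & A0 & A1 & A2 & As).
  split; [intro k; rewrite <- H; apply Hn|].
  split; [exact (ZS_ext _ _ H A0)|].
  split; [eapply ZS_ext; [|exact A1]; intro k; cbv beta; rewrite H; reflexivity|].
  split; [eapply ZS_ext; [|exact A2]; intro k; cbv beta; rewrite H; reflexivity|].
  rewrite <- (zsum_ext _ _ H). exact As.
Qed.
Lemma mean_ext p q : (forall k, p k = q k) -> mean p = mean q.
Proof. intro H. unfold mean. apply zsum_ext. intro k. rewrite H. reflexivity. Qed.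

Lemma pz_range s : (pz s = -1 \/ pz s = 0 \/ pz s = 1)%Z.
Proof. unfold pz. pose proof (mod2r s). lia. Qed.
Lemma pz_range' s : ((- pz s) = -1 \/ (- pz s) = 0 \/ (- pz s) = 1)%Z.
Proof. unfold pz. pose proof (mod2r s). lia. Qed.
Lemma pz_range'' s : ((1 - pz s) = -1 \/ (1 - pz s) = 0 \/ (1 - pz s) = 1)%Z.
Proof. unfold pz. pose proof (mod2r s). lia. Qed.
Lemma r0 : (0 = -1 \/ 0 = 0 \/ 0 = 1)%Z. Proof. lia. Qed.
Lemma rm1 : ((-1) = -1 \/ (-1) = 0 \/ (-1) = 1)%Z. Proof. lia. Qed.

Lemma par_pz s : par s = IZR (pz s).
Proof.
  destruct (Nat.Even_or_Odd s) as [[u ->]|[u ->]].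
  - rewrite par_even. unfold pz. replace (2 * u)%nat with (2 * u + 0)%nat by lia. rewrite mod2a. reflexivity.
  - rewrite par_odd. unfold pz. rewrite mod2a. reflexivity.
Qed.

Lemma mixA2 s : forall k, a_dens (2 * s) k = (a_dens s (k - 0)%Z + b_dens s (k - 0)%Z) / 2.
Proof. intro k. rewrite !Z.sub_0_r. apply RA2. Qed.
Lemma mixB2 s : forall k, b_dens (2 * s) k = (a_dens s (k - pz s)%Z + b_dens s (k - - pz s)%Z) / 2.
Proof. intro k. rewrite RB2. replace (k - - pz s)%Z with (k + pz s)%Z by lia. reflexivity. Qed.
Lemma mixA3 s : forall k, a_dens (2 * s + 1) k = (a_dens s (k - pz s)%Z + b_dens s (k - (1 - pz s))%Z) / 2.
Proof. intro k. apply RA3. Qed.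
Lemma mixB3 s : forall k, b_dens (2 * s + 1) k = (a_dens (s + 1) (k - 0)%Z + b_dens (s + 1) (k - -1)%Z) / 2.
Proof. intro k. rewrite RB3, Z.sub_0_r. replace (k - -1)%Z with (k + 1)%Z by lia. reflexivity. Qed.

Lemma GoodAll : forall t, Good (a_dens t) /\ Good (b_dens t).
Proof.
  intro t. induction t as [t IH] using (well_founded_induction lt_wf).
  destruct (Nat.eq_dec t 0) as [->|Ht0].
  { destruct delta0_good as [G _]. split; eapply Good_ext; try exact G; intro k; symmetry; [apply R0A | apply R0B]. }
  destruct (Nat.Even_or_Odd t) as [[s ->]|[s ->]].
  - destruct (IH s ltac:(lia)) as [GA GB]. split.
    + exact (proj1 (mixture _ _ _ _ _ r0 r0 GA GB (mixA2 s))).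
    + exact (proj1 (mixture _ _ _ _ _ (pz_range s) (pz_range' s) GA GB (mixB2 s))).
  - destruct (IH s ltac:(lia)) as [GA GB]. split.
    + exact (proj1 (mixture _ _ _ _ _ (pz_range s) (pz_range'' s) GA GB (mixA3 s))).
    + destruct (Nat.eq_dec s 0) as [->|Hs0].
      * eapply Good_ext; [|exact beta1_good]. intro k. symmetry. apply R1B.
      * destruct (IH (s + 1)%nat ltac:(lia)) as [GA' GB'].
        exact (proj1 (mixture _ _ _ _ _ r0 rm1 GA' GB' (mixB3 s))).
Qed.

Lemma HF1 s : mixOK (m_alpha (2 * s)) (v_alpha (2 * s)) (m_alpha s + 0) (v_alpha s) (m_beta s + 0) (v_beta s).
Proof.
  destruct (GoodAll s) as [GA GB].
  destruct (mixture _ _ _ _ _ r0 r0 GA GB (mixA2 s)) as (_ & E1 & E2).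
  unfold m_alpha, m_beta, v_alpha, v_beta. split; [rewrite E1 | rewrite E2]; simpl; field.
Qed.
Lemma HF2 s : mixOK (m_beta (2 * s)) (v_beta (2 * s)) (m_alpha s + par s) (v_alpha s) (m_beta s + - par s) (v_beta s).
Proof.
  destruct (GoodAll s) as [GA GB].
  destruct (mixture _ _ _ _ _ (pz_range s) (pz_range' s) GA GB (mixB2 s)) as (_ & E1 & E2).
  unfold m_alpha, m_beta, v_alpha, v_beta. rewrite par_pz. rewrite opp_IZR in E1, E2.
  split; [rewrite E1 | rewrite E2]; field.
Qed.
Lemma HF3 s : mixOK (m_alpha (2 * s + 1)) (v_alpha (2 * s + 1)) (m_alpha s + par s) (v_alpha s) (m_beta s + (1 - par s)) (v_beta s).
Proof.
  destruct (GoodAll s) as [GA GB].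
  destruct (mixture _ _ _ _ _ (pz_range s) (pz_range'' s) GA GB (mixA3 s)) as (_ & E1 & E2).
  unfold m_alpha, m_beta, v_alpha, v_beta. rewrite par_pz. rewrite minus_IZR in E1, E2.
  split; [rewrite E1 | rewrite E2]; field.
Qed.
Lemma HF4 s : mixOK (m_beta (2 * s + 1)) (v_beta (2 * s + 1)) (m_alpha (s + 1) + 0) (v_alpha (s + 1)) (m_beta (s + 1) + -1) (v_beta (s + 1)).
Proof.
  destruct (GoodAll (s + 1)) as [GA GB].
  destruct (mixture _ _ _ _ _ r0 rm1 GA GB (mixB3 s)) as (_ & E1 & E2).
  unfold m_alpha, m_beta, v_alpha, v_beta. split; [rewrite E1 | rewrite E2]; simpl; field.
Qed.

Lemma H0 : m_alpha 0 = 0 /\ m_beta 0 = 0.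
Proof.
  destruct delta0_good as (_ & Hm & _). unfold m_alpha, m_beta.
  rewrite (mean_ext _ delta0 R0A), (mean_ext _ delta0 R0B). auto.
Qed.

Lemma HVall s : 0 <= v_alpha s /\ 0 <= v_beta s /\ Rabs (v_alpha s - v_beta s) <= 2.
Proof.
  destruct (GoodAll s) as [GA GB]. split; [apply var_nonneg, GA|]. split; [apply var_nonneg, GB|].
  apply (Dbound m_alpha m_beta v_alpha v_beta HF1 HF2 HF3 HF4 H0).
Qed.

Theorem lemma3p7 :
  exists Cst : R, forall (t : nat) (th : R),
    Rabs th <= PI -> maxnorm6 (X t th) <= Cst * Rabs th ^ 3.
Proof.
  exists 16. intros t th _.
  apply assemble; [exact HF1 | exact HF2 | exact HF3 | exact HF4 | | exact HVall].
  exact (mbound m_alpha m_beta v_alpha v_beta HF1 HF2 HF3 HF4 H0).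
Qed.
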